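(* For all $\lambda j$-terms $t$, $u_1,\dots,u_m$ ($m\ge1$), $v_1,\dots,v_n$ ($n\ge0$) and pairwise distinct variables $x_1,\dots,x_m$ such that no $x_i$ is free in any $u_j$: if $u_1,\dots,u_m$ are $\lambda j$-strongly normalizing and $t\{x_1/u_1\}\cdots\{x_m/u_m\}\,v_1\cdots v_n$ is $\lambda j$-strongly normalizing, then $t[x_1/u_1]\cdots[x_m/u_m]\,v_1\cdots v_n$ is $\lambda j$-strongly normalizing.
   Context: $\lambda j$-terms are generated by $t,u::= x\mid \lambda x.t\mid t\,u\mid t[x/u]$ ($x$ ranging over variables); $\lambda x.t$ and $t[x/u]$ bind $x$ in $t$ (not in $u$), and terms are considered modulo $\alpha$-conversion. $\mathrm{fv}(t)$ is the set of free variables, $t\{x/u\}$ is capture-avoiding meta-level substitution, and $|t|_x$ is the number of free occurrences of $x$ in $t$. Application associates to the left: $t\,v_1\cdots v_n=(\dots(t\,v_1)\dots)v_n$. If $|t|_x=n\ge2$, $t_{[y]_x}$ denotes any term obtained from $t$ by replacing $k$ of the free occurrences of $x$ by a fresh variable $y$, for some $1\le k\le n-1$. ${\tt L}$ denotes a (possibly empty) list of jumps $[x_1/u_1]\dots[x_k/u_k]$. The rewriting rules, closed under all contexts, are: $({\tt dB})$ $(\lambda x.t){\tt L}\,u\to t[x/u]{\tt L}$ where no $x_i$ of ${\tt L}$ is free in $u$; $({\tt w})$ $t[x/u]\to t$ if $|t|_x=0$; $({\tt d})$ $t[x/u]\to t\{x/u\}$ if $|t|_x=1$; $({\tt c})$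 $t[x/u]\to t_{[y]_x}[x/u][y/u]$ if $|t|_x\ge2$, $y$ fresh. $\to_{\lambda j}$ is the union of all four. A term is $\lambda j$-strongly normalizing if it has no infinite $\to_{\lambda j}$-reduction sequence. *)

(* Defs.v *)
(* The lambda-j calculus in the locally nameless style:
   free variables are names (nat), bound variables are de Bruijn indices,
   so alpha-equivalent terms are syntactically equal.  lambda-j terms are
   the locally closed raw terms ([lc]). *)
From Stdlib Require Import Arith List.
Import ListNotations.

Definition var := nat.

(* [abs t] is  \x.t  and  [jsub t u]  is  t[x/u]; in both cases bound index 0
   of the body t refers to the bound variable x; u is outside the binder. *)
Inductive term : Type :=
| bvar (i : nat)
| fvar (x : var)
| abs  (t : term)
| app  (t u : term)
| jsub (t u : term).

Fixpoint open_rec (k : nat) (u : term) (t : term) : term :=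
  match t with
  | bvar i => if Nat.eqb k i then u else bvar i
  | fvar x => fvar x
  | abs t1 => abs (open_rec (S k) u t1)
  | app t1 t2 => app (open_rec k u t1) (open_rec k u t2)
  | jsub t1 t2 => jsub (open_rec (S k) u t1) (open_rec k u t2)
  end.
Definition open (t u : term) : term := open_rec 0 u t.

Fixpoint close_rec (k : nat) (x : var) (t : term) : term :=
  match t with
  | bvar i => bvar i
  | fvar y => if Nat.eqb x y then bvar k else fvar y
  | abs t1 => abs (close_rec (S k) x t1)
  | app t1 t2 => app (close_rec k x t1) (close_rec k x t2)
  | jsub t1 t2 => jsub (close_rec (S k) x t1) (close_rec k x t2)
  end.
Definition close (x : var) (t : term) : term := close_rec 0 x t.

Fixpoint fv (t : term) : list var :=
  match t with
  | bvar _ => []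
  | fvar x => [x]
  | abs t1 => fv t1
  | app t1 t2 => fv t1 ++ fv t2
  | jsub t1 t2 => fv t1 ++ fv t2
  end.

Fixpoint occ (x : var) (t : term) : nat :=
  match t with
  | bvar _ => 0
  | fvar y => if Nat.eqb x y then 1 else 0
  | abs t1 => occ x t1
  | app t1 t2 => occ x t1 + occ x t2
  | jsub t1 t2 => occ x t1 + occ x t2
  end.

(* meta-level substitution t{x/u} (capture avoiding for locally closed u) *)
Fixpoint subst (x : var) (u : term) (t : term) : term :=
  match t with
  | bvar i => bvar i
  | fvar y => if Nat.eqb x y then u else fvar y
  | abs t1 => abs (subst x u t1)
  | app t1 t2 => app (subst x u t1) (subst x u t2)
  | jsub t1 t2 => jsub (subst x u t1) (subst x u t2)
  end.

Inductive lc : term -> Prop :=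
| lc_var : forall x, lc (fvar x)
| lc_abs : forall (L : list var) t,
    (forall x, ~ In x L -> lc (open t (fvar x))) -> lc (abs t)
| lc_app : forall t u, lc t -> lc u -> lc (app t u)
| lc_jsub : forall (L : list var) t u,
    (forall x, ~ In x L -> lc (open t (fvar x))) -> lc u -> lc (jsub t u).

Inductive rename_some (x y : var) : term -> term -> Prop :=
| rs_hit : rename_some x y (fvar x) (fvar y)
| rs_refl : forall t, rename_some x y t t
| rs_abs : forall t t', rename_some x y t t' -> rename_some x y (abs t) (abs t')
| rs_app : forall t1 t1' t2 t2', rename_some x y t1 t1' -> rename_some x y t2 t2' ->
    rename_some x y (app t1 t2) (app t1' t2')
| rs_jsub : forall t1 t1' t2 t2', rename_some x y t1 t1' -> rename_some x y t2 t2' ->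
    rename_some x y (jsub t1 t2) (jsub t1' t2').

(* list of jumps: jumps [u1;...;uk] t = t[x1/u1]...[xk/uk] (binders anonymous) *)
Fixpoint jumps (L : list term) (t : term) : term :=
  match L with
  | [] => t
  | u :: L' => jumps L' (jsub t u)
  end.

(* In the rules for a jump t[x/u] we pick a name x fresh for t and u (any
   such choice is an alpha-renaming) and work with the named body
   s := open t (fvar x). *)
Inductive red : term -> term -> Prop :=
| red_dB : forall L t u,
    lc (app (jumps L (abs t)) u) ->
    red (app (jumps L (abs t)) u) (jumps L (jsub t u))
| red_w : forall t u x,
    lc (jsub t u) -> ~ In x (fv t ++ fv u) ->
    occ x (open t (fvar x)) = 0 ->
    red (jsub t u) (open t (fvar x))
| red_d : forall t u x,
    lc (jsub t u) -> ~ In x (fv t ++ fv u) ->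
    occ x (open t (fvar x)) = 1 ->
    red (jsub t u) (subst x u (open t (fvar x)))
| red_c : forall t u x y s',
    lc (jsub t u) -> ~ In x (fv t ++ fv u) -> ~ In y (fv t ++ fv u) -> x <> y ->
    2 <= occ x (open t (fvar x)) ->
    rename_some x y (open t (fvar x)) s' ->
    1 <= occ y s' -> occ y s' <= occ x (open t (fvar x)) - 1 ->
    (* t_{[y]_x}[x/u][y/u] *)
    red (jsub t u) (jsub (close y (jsub (close x s') u)) u)
| red_abs : forall (L : list var) t t',
    (forall x, ~ In x L -> red (open t (fvar x)) (open t' (fvar x))) ->
    red (abs t) (abs t')
| red_app_l : forall t t' u, red t t' -> lc u -> red (app t u) (app t' u)
| red_app_r : forall t u u', lc t -> red u u' -> red (app t u) (app t u')
| red_jsub_l : forall (L : list var) t t' u,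
    (forall x, ~ In x L -> red (open t (fvar x)) (open t' (fvar x))) -> lc u ->
    red (jsub t u) (jsub t' u)
| red_jsub_r : forall (L : list var) t u u',
    (forall x, ~ In x L -> lc (open t (fvar x))) -> red u u' ->
    red (jsub t u) (jsub t u').

Definition SN (t : term) : Prop := Acc (fun a b => red b a) t.

Fixpoint app_list (t : term) (vs : list term) : term :=
  match vs with
  | [] => t
  | v :: vs' => app_list (app t v) vs'
  end.

Fixpoint msubst (s : list (var * term)) (t : term) : term :=
  match s with
  | [] => t
  | (x, u) :: s' => msubst s' (subst x u t)
  end.

Fixpoint mjump (s : list (var * term)) (t : term) : term :=
  match s with
  | [] => t
  | (x, u) :: s' => mjump s' (jsub (close x t) u)
  end.

(* Main.v *)
Require Import Defs.
From Stdlib Require Import Arith List Lia Relations Wellfounded.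
Import ListNotations.
Import Defs.

Fixpoint lc_at (k : nat) (t : term) : Prop :=
  match t with
  | bvar i => i < k
  | fvar _ => True
  | abs t1 => lc_at (S k) t1
  | app a b => lc_at k a /\ lc_at k b
  | jsub a b => lc_at (S k) a /\ lc_at k b
  end.

Fixpoint bocc (k : nat) (t : term) : nat :=
  match t with
  | bvar i => if Nat.eqb k i then 1 else 0
  | fvar _ => 0
  | abs t1 => bocc (S k) t1
  | app a b => bocc k a + bocc k b
  | jsub a b => bocc (S k) a + bocc k b
  end.

Fixpoint size (t : term) : nat :=
  match t with
  | bvar _ => 1 | fvar _ => 1
  | abs a => S (size a)
  | app a b => S (size a + size b)
  | jsub a b => S (size a + size b)
  end.

Ltac eqbs := repeat (match goal with
  | |- context [Nat.eqb ?a ?b] => destruct (Nat.eqb_spec a b); subst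
  | H : context [Nat.eqb ?a ?b] |- _ => destruct (Nat.eqb_spec a b); subst
  end; simpl in *; try congruence).

Lemma fresh_ex (L : list var) : exists x, ~ In x L.
Proof.
  exists (S (fold_right max 0 L)).
  assert (H : forall y, In y L -> y <= fold_right max 0 L).
  { induction L; simpl; intros y Hy; [easy|]. destruct Hy; subst; lia || (specialize (IHL _ H); lia). }
  intro Hi; apply H in Hi; lia.
Qed.

Lemma lc_at_mono : forall t k k', lc_at k t -> k <= k' -> lc_at k' t.
Proof. induction t; simpl; intros k k' H Hk; try lia; auto.
  - eapply IHt; eauto; lia.
  - destruct H; split; eauto.
  - destruct H; split; [eapply IHt1|eapply IHt2]; eauto; lia.
Qed.

Lemma lc_at_0 : forall t k, lc_at 0 t -> lc_at k t.
Proof. intros; eapply lc_at_mono; eauto; lia. Qed.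

Lemma open_lc_at : forall t k u, lc_at k t -> open_rec k u t = t.
Proof. induction t; simpl; intros; f_equal; intuition eauto.
  eqbs; try (solve [auto | intuition (try lia) | rewrite Nat.eqb_refl; auto | apply occ_fv; auto | eapply bocc_lc_at; eauto; lia | rewrite open_lc_at; auto; apply lc_at_0; auto | apply lc_at_0; auto | rewrite close_fresh; auto]).
Qed.

Lemma open_lc_at_lower : forall t k u, lc_at (S k) t -> lc_at k u -> lc_at k (open_rec k u t).
Proof. induction t; simpl; intros; intuition eauto.
  eqbs; try (solve [auto | intuition (try lia) | rewrite Nat.eqb_refl; auto | apply occ_fv; auto | eapply bocc_lc_at; eauto; lia | rewrite open_lc_at; auto; apply lc_at_0; auto | apply lc_at_0; auto | rewrite close_fresh; auto]).
  apply IHt; auto; eapply lc_at_mono; eauto.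
  apply IHt1; auto; eapply lc_at_mono; eauto.
Qed.

Lemma lc_at_open_inv : forall t k u, lc_at k (open_rec k u t) -> lc_at (S k) t.
Proof. induction t; simpl; intros; intuition eauto.
  revert H; eqbs; simpl; lia.
Qed.

Lemma close_lc_at : forall t k x, lc_at k t -> lc_at (S k) (close_rec k x t).
Proof. induction t; simpl; intros; intuition eauto.
  eqbs; try (solve [auto | intuition (try lia) | rewrite Nat.eqb_refl; auto | apply occ_fv; auto | eapply bocc_lc_at; eauto; lia | rewrite open_lc_at; auto; apply lc_at_0; auto | apply lc_at_0; auto | rewrite close_fresh; auto]).
Qed.

Lemma subst_lc_at : forall t k x u, lc_at k t -> lc_at 0 u -> lc_at k (subst x u t).
Proof. induction t; simpl; intros; intuition eauto.
  eqbs; try (solve [auto | intuition (try lia) | rewrite Nat.eqb_refl; auto | apply occ_fv; auto | eapply bocc_lc_at; eauto; lia | rewrite open_lc_at; auto; apply lc_at_0; auto | apply lc_at_0; auto | rewrite close_fresh; auto]).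
Qed.

Lemma lc_at_bocc : forall t k, lc_at (S k) t -> bocc k t = 0 -> lc_at k t.
Proof. induction t; simpl; intros; intuition eauto.
  revert H0; eqbs; intros; lia.
  apply IHt1; auto; lia. apply IHt2; auto; lia.
  apply IHt1; auto; lia. apply IHt2; auto; lia.
Qed.

Lemma bocc_lc_at : forall t k j, lc_at k t -> k <= j -> bocc j t = 0.
Proof. induction t; simpl; intros; intuition eauto.
  eqbs; try (solve [auto | intuition (try lia) | rewrite Nat.eqb_refl; auto | apply occ_fv; auto | eapply bocc_lc_at; eauto; lia | rewrite open_lc_at; auto; apply lc_at_0; auto | apply lc_at_0; auto | rewrite close_fresh; auto]).
  apply (IHt (S k)); auto; lia.
  rewrite (IHt1 k), (IHt2 k); auto.
  rewrite (IHt1 (S k)), (IHt2 k); auto; lia.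
Qed.

Lemma fv_close : forall t k x y, In y (fv (close_rec k x t)) <-> In y (fv t) /\ y <> x.
Proof. induction t; simpl; intros; try rewrite !in_app_iff; try rewrite IHt1, IHt2; try rewrite IHt; try tauto.
  eqbs; try (solve [auto | intuition (try lia) | rewrite Nat.eqb_refl; auto | apply occ_fv; auto | eapply bocc_lc_at; eauto; lia | rewrite open_lc_at; auto; apply lc_at_0; auto | apply lc_at_0; auto | rewrite close_fresh; auto]).
Qed.

Lemma fv_open : forall t k u y, In y (fv (open_rec k u t)) -> In y (fv t) \/ In y (fv u).
Proof. induction t; simpl; intros k u y H; try rewrite !in_app_iff in *.
  - revert H; eqbs; simpl; tauto.
  - tauto.
  - eauto.
  - destruct H as [H|H]; [destruct (IHt1 _ _ _ H)|destruct (IHt2 _ _ _ H)]; tauto.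
  - destruct H as [H|H]; [destruct (IHt1 _ _ _ H)|destruct (IHt2 _ _ _ H)]; tauto.
Qed.

Lemma fv_open_incl : forall t k u y, In y (fv t) -> In y (fv (open_rec k u t)).
Proof. induction t; simpl; intros; try rewrite !in_app_iff in *; intuition eauto. Qed.

Lemma fv_subst : forall t x u y, In y (fv (subst x u t)) -> (In y (fv t) /\ y <> x) \/ In y (fv u).
Proof. induction t; simpl; intros x0 u y H; try rewrite !in_app_iff in *.
  - tauto.
  - revert H; eqbs; simpl; intuition congruence.
  - eauto.
  - destruct H as [H|H]; [destruct (IHt1 _ _ _ H)|destruct (IHt2 _ _ _ H)]; tauto.
  - destruct H as [H|H]; [destruct (IHt1 _ _ _ H)|destruct (IHt2 _ _ _ H)]; tauto.
Qed.

Lemma fv_subst_incl : forall t x u y, In y (fv t) -> y <> x -> In y (fv (subst x u t)).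
Proof. induction t; simpl; intros; try rewrite !in_app_iff in *; intuition eauto.
  subst; eqbs; simpl; intuition.
Qed.

Lemma subst_fresh : forall t x u, ~ In x (fv t) -> subst x u t = t.
Proof. induction t; simpl; intros; try rewrite !in_app_iff in *; f_equal; intuition eauto.
  eqbs; try (solve [auto | intuition (try lia) | rewrite Nat.eqb_refl; auto | apply occ_fv; auto | eapply bocc_lc_at; eauto; lia | rewrite open_lc_at; auto; apply lc_at_0; auto | apply lc_at_0; auto | rewrite close_fresh; auto]).
Qed.

Lemma close_fresh : forall t k x, ~ In x (fv t) -> close_rec k x t = t.
Proof. induction t; simpl; intros; try rewrite !in_app_iff in *; f_equal; intuition eauto.
  eqbs; try (solve [auto | intuition (try lia) | rewrite Nat.eqb_refl; auto | apply occ_fv; auto | eapply bocc_lc_at; eauto; lia | rewrite open_lc_at; auto; apply lc_at_0; auto | apply lc_at_0; auto | rewrite close_fresh; auto]).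
Qed.

Lemma subst_open : forall t k x u w, lc_at 0 u ->
  subst x u (open_rec k w t) = open_rec k (subst x u w) (subst x u t).
Proof. induction t; simpl; intros; f_equal; auto.
  eqbs; try (solve [auto | intuition (try lia) | rewrite Nat.eqb_refl; auto | apply occ_fv; auto | eapply bocc_lc_at; eauto; lia | rewrite open_lc_at; auto; apply lc_at_0; auto | apply lc_at_0; auto | rewrite close_fresh; auto]).
  eqbs; try (solve [auto | intuition (try lia) | rewrite Nat.eqb_refl; auto | apply occ_fv; auto | eapply bocc_lc_at; eauto; lia | rewrite open_lc_at; auto; apply lc_at_0; auto | apply lc_at_0; auto | rewrite close_fresh; auto]).
Qed.

Lemma subst_open_var : forall t k x u z, lc_at 0 u -> x <> z ->
  subst x u (open_rec k (fvar z) t) = open_rec k (fvar z) (subst x u t).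
Proof. intros. rewrite subst_open; auto. simpl. eqbs; auto. Qed.

Lemma subst_intro : forall t k x u, ~ In x (fv t) ->
  subst x u (open_rec k (fvar x) t) = open_rec k u t.
Proof. induction t; simpl; intros; try rewrite !in_app_iff in *; f_equal; intuition eauto.
  eqbs; try (solve [auto | intuition (try lia) | rewrite Nat.eqb_refl; auto | apply occ_fv; auto | eapply bocc_lc_at; eauto; lia | rewrite open_lc_at; auto; apply lc_at_0; auto | apply lc_at_0; auto | rewrite close_fresh; auto]).
  eqbs; try (solve [auto | intuition (try lia) | rewrite Nat.eqb_refl; auto | apply occ_fv; auto | eapply bocc_lc_at; eauto; lia | rewrite open_lc_at; auto; apply lc_at_0; auto | apply lc_at_0; auto | rewrite close_fresh; auto]).
Qed.

Lemma open_close : forall t k x w, lc_at k t -> open_rec k w (close_rec k x t) = subst x w t.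
Proof. induction t; simpl; intros; f_equal; intuition eauto.
  eqbs; try (solve [auto | intuition (try lia) | rewrite Nat.eqb_refl; auto | apply occ_fv; auto | eapply bocc_lc_at; eauto; lia | rewrite open_lc_at; auto; apply lc_at_0; auto | apply lc_at_0; auto | rewrite close_fresh; auto]).
  eqbs; try (solve [auto | intuition (try lia) | rewrite Nat.eqb_refl; auto | apply occ_fv; auto | eapply bocc_lc_at; eauto; lia | rewrite open_lc_at; auto; apply lc_at_0; auto | apply lc_at_0; auto | rewrite close_fresh; auto]).
Qed.

Lemma close_open : forall t k x, ~ In x (fv t) -> close_rec k x (open_rec k (fvar x) t) = t.
Proof. induction t; simpl; intros; try rewrite !in_app_iff in *; f_equal; intuition eauto.
  eqbs; try (solve [auto | intuition (try lia) | rewrite Nat.eqb_refl; auto | apply occ_fv; auto | eapply bocc_lc_at; eauto; lia | rewrite open_lc_at; auto; apply lc_at_0; auto | apply lc_at_0; auto | rewrite close_fresh; auto]).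
  eqbs; try (solve [auto | intuition (try lia) | rewrite Nat.eqb_refl; auto | apply occ_fv; auto | eapply bocc_lc_at; eauto; lia | rewrite open_lc_at; auto; apply lc_at_0; auto | apply lc_at_0; auto | rewrite close_fresh; auto]).
Qed.

Lemma close_rename : forall t k x y, ~ In y (fv t) ->
  close_rec k x t = close_rec k y (subst x (fvar y) t).
Proof. induction t; simpl; intros; try rewrite !in_app_iff in *; f_equal; intuition eauto.
  eqbs; try (solve [auto | intuition (try lia) | rewrite Nat.eqb_refl; auto | apply occ_fv; auto | eapply bocc_lc_at; eauto; lia | rewrite open_lc_at; auto; apply lc_at_0; auto | apply lc_at_0; auto | rewrite close_fresh; auto]).
Qed.

Lemma subst_close : forall t k x z w, z <> x -> ~ In x (fv w) ->
  subst z w (close_rec k x t) = close_rec k x (subst z w t).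
Proof. induction t; simpl; intros; f_equal; intuition eauto.
  eqbs; try (solve [auto | intuition (try lia) | rewrite Nat.eqb_refl; auto | apply occ_fv; auto | eapply bocc_lc_at; eauto; lia | rewrite open_lc_at; auto; apply lc_at_0; auto | apply lc_at_0; auto | rewrite close_fresh; auto]).
Qed.

Lemma subst_var_back : forall t x z, ~ In z (fv t) -> subst z (fvar x) (subst x (fvar z) t) = t.
Proof. induction t; simpl; intros; try rewrite !in_app_iff in *; f_equal; intuition eauto.
  eqbs; try (solve [auto | intuition (try lia) | rewrite Nat.eqb_refl; auto | apply occ_fv; auto | eapply bocc_lc_at; eauto; lia | rewrite open_lc_at; auto; apply lc_at_0; auto | apply lc_at_0; auto | rewrite close_fresh; auto]).
Qed.

Lemma occ_fv : forall t x, occ x t = 0 <-> ~ In x (fv t).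
Proof. induction t; simpl; intros.
  - tauto.
  - eqbs; simpl; intuition (lia || congruence).
  - apply IHt.
  - pose proof (IHt1 x); pose proof (IHt2 x); rewrite in_app_iff.
    destruct (occ x t1), (occ x t2); intuition (try lia).
  - pose proof (IHt1 x); pose proof (IHt2 x); rewrite in_app_iff.
    destruct (occ x t1), (occ x t2); intuition (try lia).
Qed.

Lemma occ_open_var : forall t k z, occ z (open_rec k (fvar z) t) = occ z t + bocc k t.
Proof. induction t; simpl; intros; try rewrite IHt1, IHt2; try rewrite IHt; try lia.
  eqbs; try (solve [auto | intuition (try lia) | rewrite Nat.eqb_refl; auto | apply occ_fv; auto | eapply bocc_lc_at; eauto; lia | rewrite open_lc_at; auto; apply lc_at_0; auto | apply lc_at_0; auto | rewrite close_fresh; auto]).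
Qed.

Lemma occ_open_other : forall t k z y, y <> z -> occ y (open_rec k (fvar z) t) = occ y t.
Proof. induction t; simpl; intros; try rewrite IHt1, IHt2; try rewrite IHt; try lia.
  eqbs; try (solve [auto | intuition (try lia) | rewrite Nat.eqb_refl; auto | apply occ_fv; auto | eapply bocc_lc_at; eauto; lia | rewrite open_lc_at; auto; apply lc_at_0; auto | apply lc_at_0; auto | rewrite close_fresh; auto]).
Qed.

Lemma bocc_close : forall t k x, bocc k (close_rec k x t) = bocc k t + occ x t.
Proof. induction t; simpl; intros; try rewrite IHt1, IHt2; try rewrite IHt; try lia.
  eqbs; try (solve [auto | intuition (try lia) | rewrite Nat.eqb_refl; auto | apply occ_fv; auto | eapply bocc_lc_at; eauto; lia | rewrite open_lc_at; auto; apply lc_at_0; auto | apply lc_at_0; auto | rewrite close_fresh; auto]).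
Qed.

Lemma occ_close : forall t k x y, y <> x -> occ y (close_rec k x t) = occ y t.
Proof. induction t; simpl; intros; try rewrite IHt1, IHt2; try rewrite IHt; try lia.
  eqbs; try (solve [auto | intuition (try lia) | rewrite Nat.eqb_refl; auto | apply occ_fv; auto | eapply bocc_lc_at; eauto; lia | rewrite open_lc_at; auto; apply lc_at_0; auto | apply lc_at_0; auto | rewrite close_fresh; auto]).
Qed.

Lemma bocc_subst : forall t k x u, lc_at 0 u -> bocc k (subst x u t) = bocc k t.
Proof. induction t; simpl; intros; try rewrite IHt1, IHt2; try rewrite IHt; try lia; auto.
  eqbs; try (solve [auto | intuition (try lia) | rewrite Nat.eqb_refl; auto | apply occ_fv; auto | eapply bocc_lc_at; eauto; lia | rewrite open_lc_at; auto; apply lc_at_0; auto | apply lc_at_0; auto | rewrite close_fresh; auto]).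
Qed.

Lemma occ_subst_other : forall t x u y, y <> x -> ~ In y (fv u) -> occ y (subst x u t) = occ y t.
Proof. induction t; simpl; intros; try rewrite IHt1, IHt2; try rewrite IHt; try lia; auto.
  eqbs; try (solve [auto | intuition (try lia) | rewrite Nat.eqb_refl; auto | apply occ_fv; auto | eapply bocc_lc_at; eauto; lia | rewrite open_lc_at; auto; apply lc_at_0; auto | apply lc_at_0; auto | rewrite close_fresh; auto]).
Qed.

Lemma occ_subst_var : forall t x y, y <> x -> occ y (subst x (fvar y) t) = occ y t + occ x t.
Proof. induction t; simpl; intros; try rewrite IHt1, IHt2; try rewrite IHt; try lia; auto.
  eqbs; try (solve [auto | intuition (try lia) | rewrite Nat.eqb_refl; auto | apply occ_fv; auto | eapply bocc_lc_at; eauto; lia | rewrite open_lc_at; auto; apply lc_at_0; auto | apply lc_at_0; auto | rewrite close_fresh; auto]).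
Qed.

Lemma size_open_var : forall t k z, size (open_rec k (fvar z) t) = size t.
Proof. induction t; simpl; intros; auto. eqbs; auto. Qed.

Lemma lc_lc_at : forall t, lc t -> lc_at 0 t.
Proof. induction 1; simpl; auto.
  destruct (fresh_ex L) as [x Hx]. eapply lc_at_open_inv; eauto.
  destruct (fresh_ex L) as [x Hx]. split; auto. eapply lc_at_open_inv; eauto.
Qed.

Lemma lc_at_lc : forall n t, size t <= n -> lc_at 0 t -> lc t.
Proof. induction n; intros t Hs Hl; destruct t; simpl in *; try lia; try constructor; intuition.
  apply lc_abs with (L := []). intros x _. apply IHn. unfold open; rewrite size_open_var; lia.
   apply open_lc_at_lower; simpl; auto.
  apply IHn; auto; lia. apply IHn; auto; lia.
  apply lc_jsub with (L := []). intros x _. apply IHn. unfold open; rewrite size_open_var; lia.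
   apply open_lc_at_lower; simpl; auto. apply IHn; auto; lia.
Qed.

Lemma lc_iff : forall t, lc t <-> lc_at 0 t.
Proof. split. apply lc_lc_at. apply lc_at_lc with (n := size t); auto. Qed.


Lemma R_fresh : forall x y t t', rename_some x y t t' -> ~ In x (fv t) -> t' = t.
Proof. induction 1; simpl; intros; rewrite ?in_app_iff in *; try f_equal; intuition. Qed.

Lemma R_lc : forall x y t t', rename_some x y t t' -> forall k, lc_at k t -> lc_at k t'.
Proof. induction 1; simpl; intros; intuition. Qed.

Lemma R_fv : forall x y t t', rename_some x y t t' -> forall z, In z (fv t') -> In z (fv t) \/ z = y.
Proof. induction 1; simpl; intros; rewrite ?in_app_iff in *; intuition.
  destruct (IHrename_some1 _ H2); tauto. destruct (IHrename_some2 _ H2); tauto.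
  destruct (IHrename_some1 _ H2); tauto. destruct (IHrename_some2 _ H2); tauto.
Qed.

Lemma R_occ_other : forall x y t t', rename_some x y t t' -> forall z, z <> x -> z <> y -> occ z t' = occ z t.
Proof. induction 1; simpl; intros; auto.
  eqbs.
Qed.

Lemma R_occ_sum : forall x y t t', rename_some x y t t' -> x <> y -> occ x t' + occ y t' = occ x t + occ y t.
Proof. induction 1; simpl; intros; auto.
  all: try (specialize (IHrename_some1 H1); specialize (IHrename_some2 H1); lia).
  all: eqbs.
Qed.

Lemma R_subst_var : forall x y t t', rename_some x y t t' -> forall a b,
  rename_some (if Nat.eqb a x then b else x) (if Nat.eqb a y then b else y)
    (subst a (fvar b) t) (subst a (fvar b) t').
Proof. induction 1; simpl; intros; try (constructor; auto; fail).
  destruct (Nat.eqb a x), (Nat.eqb a y); constructor.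
Qed.

Lemma R_subst : forall x y t t', rename_some x y t t' -> forall a w, a <> x -> a <> y ->
  rename_some x y (subst a w t) (subst a w t').
Proof. induction 1; simpl; intros; try (constructor; auto; fail).
  eqbs; constructor.
Qed.

Lemma R_close_inv : forall x y z t k s, rename_some x y (close_rec k z t) s -> x <> z -> y <> z ->
  exists t', s = close_rec k z t' /\ rename_some x y t t'.
Proof. intros x y z; induction t; simpl; intros k s H Hx Hy.
  - inversion H; subst. exists (bvar i); split; auto; apply rs_refl.
  - revert H; destruct (Nat.eqb_spec z x0); intro H.
    + inversion H; subst. exists (fvar x0); simpl; rewrite Nat.eqb_refl; split; auto; apply rs_refl.
    + inversion H; subst.
      * exists (fvar y); simpl. destruct (Nat.eqb_spec z y); try congruence. split; auto.
      * exists (fvar x0); simpl. destruct (Nat.eqb_spec z x0); try congruence. split; auto.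
  - inversion H; subst. exists (abs t); split; auto; apply rs_refl.
    destruct (IHt _ _ H1 Hx Hy) as [t1 [-> ?]]. exists (abs t1); split; auto; constructor; auto.
  - inversion H; subst. exists (app t1 t2); split; auto; apply rs_refl.
    destruct (IHt1 _ _ H2 Hx Hy) as [a [-> ?]]. destruct (IHt2 _ _ H4 Hx Hy) as [b [-> ?]].
    exists (app a b); split; auto; constructor; auto.
  - inversion H; subst. exists (jsub t1 t2); split; auto; apply rs_refl.
    destruct (IHt1 _ _ H2 Hx Hy) as [a [-> ?]]. destruct (IHt2 _ _ H4 Hx Hy) as [b [-> ?]].
    exists (jsub a b); split; auto; constructor; auto.
Qed.

Lemma R_subst_back : forall x y t t', rename_some x y t t' -> forall u, ~ In y (fv t) -> ~ In y (fv u) ->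
  subst y u (subst x u t') = subst x u t.
Proof. induction 1; simpl; intros u Ht Hu; rewrite ?in_app_iff in *.
  - eqbs; try rewrite Nat.eqb_refl; try apply subst_fresh; auto.
  - apply subst_fresh. intro H; apply fv_subst in H. tauto.
  - f_equal; auto.
  - f_equal; [apply IHrename_some1|apply IHrename_some2]; tauto.
  - f_equal; [apply IHrename_some1|apply IHrename_some2]; tauto.
Qed.

Lemma jumps_app : forall L1 L2 X, jumps (L1 ++ L2) X = jumps L2 (jumps L1 X).
Proof. induction L1; simpl; auto. Qed.

Lemma jumps_lc : forall A B, (forall k, lc_at k A -> lc_at k B) -> forall L k, lc_at k (jumps L A) -> lc_at k (jumps L B).
Proof. intros A B H L; revert A B H; induction L; simpl; intros; auto.
  apply (IHL (jsub A a)); auto. simpl; intuition.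
Qed.

Lemma jumps_fv : forall L X y, In y (fv (jumps L X)) <-> In y (fv X) \/ exists l, In l L /\ In y (fv l).
Proof. induction L; simpl; intros. firstorder.
  rewrite IHL; simpl; rewrite in_app_iff. firstorder. subst; auto.
Qed.

Lemma jumps_subst : forall L X x w, subst x w (jumps L X) = jumps (map (subst x w) L) (subst x w X).
Proof. induction L; simpl; intros; auto. Qed.

Lemma jumps_snoc_inv : forall L b P Q, jumps L (abs b) = jsub P Q ->
  exists L', L = L' ++ [Q] /\ jumps L' (abs b) = P.
Proof. intros L; induction L using rev_ind; simpl; intros. discriminate.
  rewrite jumps_app in H; simpl in H. inversion H; subst. eauto.
Qed.

Lemma red_w' : forall t u, lc_at 0 (jsub t u) -> bocc 0 t = 0 -> red (jsub t u) t.
Proof. intros t u Hl Hb. destruct (fresh_ex (fv t ++ fv u)) as [z Hz].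
  assert (E : open t (fvar z) = t).
  { apply open_lc_at. simpl in Hl. apply lc_at_bocc; intuition. }
  rewrite <- E at 2. apply red_w; auto. apply lc_iff; auto.
  unfold open; rewrite occ_open_var. rewrite in_app_iff in Hz.
  assert (occ z t = 0) by (apply occ_fv; tauto). lia.
Qed.

Lemma red_d' : forall t u, lc_at 0 (jsub t u) -> bocc 0 t = 1 -> red (jsub t u) (open t u).
Proof. intros t u Hl Hb. destruct (fresh_ex (fv t ++ fv u)) as [z Hz].
  rewrite in_app_iff in Hz.
  assert (E : subst z u (open t (fvar z)) = open t u) by (apply subst_intro; tauto).
  rewrite <- E. apply red_d; auto. apply lc_iff; auto. rewrite in_app_iff; auto.
  unfold open; rewrite occ_open_var.
  assert (occ z t = 0) by (apply occ_fv; tauto). lia.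
Qed.

Lemma occ_open_fresh : forall t z, ~ In z (fv t) -> occ z (open t (fvar z)) = bocc 0 t.
Proof. intros. unfold open; rewrite occ_open_var. assert (occ z t = 0) by (apply occ_fv; auto). lia. Qed.

Lemma red_c' : forall t u x y s', lc_at 0 (jsub t u) -> ~ In x (fv t ++ fv u) -> ~ In y (fv t ++ fv u) ->
  x <> y -> 2 <= bocc 0 t -> rename_some x y (open t (fvar x)) s' ->
  1 <= occ y s' -> occ y s' <= bocc 0 t - 1 ->
  red (jsub t u) (jsub (close y (jsub (close x s') u)) u).
Proof. intros. assert (E : occ x (open t (fvar x)) = bocc 0 t).
  { apply occ_open_fresh. rewrite in_app_iff in *; tauto. }
  apply red_c; auto; try rewrite E; auto. apply lc_iff; auto.
Qed.

Lemma w_res : forall t z, lc_at 1 t -> ~ In z (fv t) -> occ z (open t (fvar z)) = 0 ->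
  bocc 0 t = 0 /\ open t (fvar z) = t.
Proof. intros. rewrite occ_open_fresh in H1; auto. split; auto.
  apply open_lc_at. apply lc_at_bocc; auto. Qed.


Lemma fresh_open : forall t k x y, In y (fv (open_rec k (fvar x) t)) -> In y (fv t) \/ y = x.
Proof. intros. apply fv_open in H. simpl in H. intuition. Qed.

Lemma red_lc : forall s s', red s s' -> lc_at 0 s /\ lc_at 0 s'.
Proof.
  induction 1 as [L t u Hlc|t u x Hlc Hx Hocc|t u x Hlc Hx Hocc|t u x y s' Hlc Hx Hy Hxy Hocc Hr Hy1 Hy2
    |L t t' Hred IH|t t' u Hred IH Hu|t u u' Ht Hred IH|L t t' u Hred IH Hu|L t u u' Ht Hred IH];
  try rewrite lc_iff in *; simpl in *.
  - split; auto. destruct Hlc. apply (jumps_lc (abs t)); auto. intros k Hk; simpl in *; split; auto; apply lc_at_0; auto.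
  - split; auto. apply open_lc_at_lower; simpl; tauto.
  - split; auto. apply subst_lc_at; try tauto. apply open_lc_at_lower; simpl; tauto.
  - split; auto. unfold close. simpl. destruct Hlc as [H1 H2].
    assert (lc_at 0 s') by (eapply R_lc; eauto; apply open_lc_at_lower; simpl; auto).
    repeat split.
    + apply close_lc_at. apply close_lc_at. auto.
    + apply close_lc_at; auto.
    + auto.
  - destruct (fresh_ex L) as [z Hz]. destruct (IH z Hz). split; eapply lc_at_open_inv; eauto.
  - tauto.
  - tauto.
  - destruct (fresh_ex L) as [z Hz]. destruct (IH z Hz). split; split; auto; eapply lc_at_open_inv; eauto.
  - destruct (fresh_ex L) as [z Hz]. specialize (Ht z Hz). rewrite lc_iff in Ht.
    split; split; try tauto; eapply lc_at_open_inv; eauto.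
Qed.

Lemma red_lc_l : forall s s', red s s' -> lc_at 0 s. Proof. apply red_lc. Qed.
Lemma red_lc_r : forall s s', red s s' -> lc_at 0 s'. Proof. apply red_lc. Qed.

Lemma red_fv : forall s s', red s s' -> forall v, In v (fv s') -> In v (fv s).
Proof.
  induction 1 as [L t u Hlc|t u x Hlc Hx Hocc|t u x Hlc Hx Hocc|t u x y s' Hlc Hx Hy Hxy Hocc Hr Hy1 Hy2
    |L t t' Hred IH|t t' u Hred IH Hu|t u u' Ht Hred IH|L t t' u Hred IH Hu|L t u u' Ht Hred IH];
  intros v Hv; simpl in *; rewrite ?in_app_iff in *.
  - rewrite jumps_fv in *. simpl in *. rewrite in_app_iff in *. tauto.
  - destruct (fresh_open _ _ _ _ Hv); auto. subst. apply occ_fv in Hocc. tauto.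
  - apply fv_subst in Hv. destruct Hv as [[Hv Hne]|Hv]; auto.
    destruct (fresh_open _ _ _ _ Hv); auto. congruence.
  - unfold close in *; simpl in *; rewrite ?in_app_iff, ?fv_close in *; simpl in *; rewrite ?in_app_iff, ?fv_close in *.
    destruct Hv as [[[[Hv ?] ?]|[? ?]]|?]; try tauto.
    destruct (R_fv _ _ _ _ Hr _ Hv); try congruence.
    destruct (fresh_open _ _ _ _ H1); auto. congruence.
  - destruct (fresh_ex (v :: L)) as [z Hz]. simpl in Hz.
    assert (Hv' := fv_open_incl _ 0 (fvar z) _ Hv).
    apply IH in Hv'; [|tauto]. destruct (fresh_open _ _ _ _ Hv'); auto. intuition congruence.
  - destruct Hv; auto.
  - destruct Hv; auto.
  - destruct Hv; auto.
    destruct (fresh_ex (v :: L)) as [z Hz]. simpl in Hz.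
    assert (Hv' := fv_open_incl _ 0 (fvar z) _ H).
    apply IH in Hv'; [|tauto]. destruct (fresh_open _ _ _ _ Hv'); auto. intuition congruence.
  - destruct Hv; auto.
Qed.

Definition cres (x y : var) (s' u : term) := jsub (close y (jsub (close x s') u)) u.

Lemma c_stage : forall t u a b s' a' b', lc_at 1 t ->
  ~ In a (fv t ++ fv u) -> ~ In b (fv t ++ fv u) -> a <> b ->
  rename_some a b (open t (fvar a)) s' ->
  ~ In a' (fv t ++ fv u ++ fv s' ++ [a; b]) -> ~ In b' (fv t ++ fv u ++ fv s' ++ [a; b]) -> a' <> b' ->
  rename_some a' b' (open t (fvar a')) (subst a (fvar a') (subst b (fvar b') s')) /\
  occ b' (subst a (fvar a') (subst b (fvar b') s')) = occ b s' /\
  cres a b s' u = cres a' b' (subst a (fvar a') (subst b (fvar b') s')) u.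
Proof.
  intros t u a b s' a' b' Hlc Ha Hb Hab Hr Ha' Hb' Hab'.
  rewrite !in_app_iff in *. simpl in *.
  split; [|split].
  - pose proof (R_subst_var _ _ _ _ Hr b b') as H1.
    destruct (Nat.eqb_spec b a); try congruence. rewrite Nat.eqb_refl in H1.
    rewrite (subst_fresh (open t (fvar a))) in H1.
    2:{ intro H; destruct (fresh_open _ _ _ _ H); tauto. }
    pose proof (R_subst_var _ _ _ _ H1 a a') as H2.
    rewrite Nat.eqb_refl in H2. destruct (Nat.eqb_spec a b'); try (exfalso; tauto).
    unfold open in *. rewrite subst_intro in H2; auto.
  - rewrite occ_subst_other; simpl; try (intro; subst; tauto); try tauto.
    rewrite occ_subst_var; try (intro; subst; tauto); try tauto.
    assert (occ b' s' = 0) by (apply occ_fv; tauto). lia.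
  - unfold cres, close. f_equal.
    rewrite (close_rename _ 0 b b').
    2:{ simpl. rewrite in_app_iff, fv_close. tauto. }
    simpl. rewrite (subst_fresh u b); [|tauto].
    rewrite subst_close; [|congruence|simpl; intros [H|H]; [subst; tauto|tauto]].
    rewrite (close_rename (subst b (fvar b') s') 0 a a'); auto.
    intro H. apply fv_subst in H. simpl in H. intuition (subst; tauto).
Qed.

Ltac fs := simpl in *; repeat rewrite in_app_iff in *; simpl in *; repeat rewrite in_app_iff in *;
  intuition (subst; tauto).

Lemma c_rename : forall t u x y s', lc_at 1 t ->
  ~ In x (fv t ++ fv u) -> ~ In y (fv t ++ fv u) -> x <> y ->
  rename_some x y (open t (fvar x)) s' ->
  forall x1 y1, ~ In x1 (fv t ++ fv u) -> ~ In y1 (fv t ++ fv u) -> x1 <> y1 ->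
  exists s1, rename_some x1 y1 (open t (fvar x1)) s1 /\ occ y1 s1 = occ y s' /\
    cres x y s' u = cres x1 y1 s1 u.
Proof.
  intros t u x y s' Hlc Hx Hy Hxy Hr x1 y1 Hx1 Hy1 Hxy1.
  destruct (fresh_ex (fv t ++ fv u ++ fv s' ++ [x; y; x1; y1])) as [x2 Hx2].
  destruct (fresh_ex (x2 :: fv t ++ fv u ++ fv s' ++ [x; y; x1; y1])) as [y2 Hy2].
  destruct (c_stage t u x y s' x2 y2 Hlc Hx Hy Hxy Hr ltac:(fs) ltac:(fs) ltac:(fs)) as [H1 [H2 H3]].
  set (s2 := subst x (fvar x2) (subst y (fvar y2) s')) in *.
  assert (Hs2 : forall v, In v (fv s2) -> In v (fv t) \/ v = x2 \/ v = y2).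
  { intros v Hv. destruct (R_fv _ _ _ _ H1 _ Hv); auto. destruct (fresh_open _ _ _ _ H); auto. }
  assert (Nx1 : ~ In x1 (fv s2)) by (intro H; apply Hs2 in H; fs).
  assert (Ny1 : ~ In y1 (fv s2)) by (intro H; apply Hs2 in H; fs).
  destruct (c_stage t u x2 y2 s2 x1 y1 Hlc ltac:(fs) ltac:(fs) ltac:(fs) H1 ltac:(fs) ltac:(fs) Hxy1)
    as [G1 [G2 G3]].
  eexists; split; [exact G1|]. split. rewrite G2; auto. congruence.
Qed.

Lemma red_subst : forall s s', red s s' -> forall z w, lc_at 0 w -> red (subst z w s) (subst z w s').
Proof.
  induction 1 as [L t u Hlc|t u x Hlc Hx Hocc|t u x Hlc Hx Hocc|t u x y s' Hlc Hx Hy Hxy Hocc Hr Hy1 Hy2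
    |L t t' Hred IH|t t' u Hred IH Hu|t u u' Ht Hred IH|L t t' u Hred IH Hu|L t u u' Ht Hred IH];
  intros z w Hw.
  - assert (H : lc_at 0 (subst z w (app (jumps L (abs t)) u))).
    { apply subst_lc_at; auto. apply lc_iff; auto. }
    simpl in *. rewrite !jumps_subst in *. simpl in *. apply red_dB. apply lc_iff; auto.
  - rewrite lc_iff in Hlc. simpl in Hlc.
    rewrite in_app_iff in Hx.
    destruct (w_res t x) as [Hb E]; try tauto. rewrite E.
    simpl. apply red_w'. simpl; split; apply subst_lc_at; tauto.
    rewrite bocc_subst; auto.
  - rewrite lc_iff in Hlc. simpl in Hlc. rewrite in_app_iff in Hx.
    rewrite occ_open_fresh in Hocc; [|tauto].
    unfold open; rewrite subst_intro; [|tauto].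
    rewrite subst_open; auto. simpl. apply red_d'.
    simpl; split; apply subst_lc_at; tauto. rewrite bocc_subst; auto.
  - rewrite lc_iff in Hlc. simpl in Hlc.
    rewrite occ_open_fresh in Hocc, Hy2; [|rewrite in_app_iff in Hx; tauto|rewrite in_app_iff in Hx; tauto].
    destruct (fresh_ex (z :: fv t ++ fv u ++ fv w)) as [x1 Hx1].
    destruct (fresh_ex (x1 :: z :: fv t ++ fv u ++ fv w)) as [y1 Hy1'].
    simpl in Hx1, Hy1'. rewrite !in_app_iff in Hx1, Hy1'.
    destruct (c_rename t u x y s') with (x1 := x1) (y1 := y1) as [s1 [R1 [O1 E1]]]; try tauto;
      try (rewrite in_app_iff; tauto).
    change (red (subst z w (jsub t u)) (subst z w (cres x y s' u))). rewrite E1.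
    unfold cres, close. cbn [subst].
    rewrite !subst_close; try fs. cbn [subst].
    rewrite !subst_close; try fs.
    apply red_c'.
    + simpl; split; apply subst_lc_at; tauto.
    + rewrite in_app_iff; intros [H|H]; apply fv_subst in H; fs.
    + rewrite in_app_iff; intros [H|H]; apply fv_subst in H; fs.
    + fs.
    + rewrite bocc_subst; auto.
    + unfold open. rewrite <- subst_open_var; auto; try fs.
      apply R_subst; auto; fs.
    + rewrite occ_subst_other; try lia; fs.
    + rewrite occ_subst_other; try lia; try fs. rewrite bocc_subst; auto. lia.
  - simpl. apply red_abs with (L := z :: L ++ fv w). intros y Hy. simpl in Hy; rewrite in_app_iff in Hy.
    unfold open. rewrite <- !subst_open_var; auto; try (intro; subst; tauto).
    apply IH; auto.
  - simpl. apply red_app_l; auto. apply lc_iff, subst_lc_at; auto. apply lc_iff; auto.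
  - simpl. apply red_app_r; auto. apply lc_iff, subst_lc_at; auto. apply lc_iff; auto.
  - simpl. apply red_jsub_l with (L := z :: L ++ fv w).
    intros y Hy. simpl in Hy; rewrite in_app_iff in Hy.
    unfold open. rewrite <- !subst_open_var; auto; try (intro; subst; tauto).
    apply IH; auto.
    apply lc_iff, subst_lc_at; auto. apply lc_iff; auto.
  - simpl. apply red_jsub_r with (L := z :: L ++ fv w); auto.
    intros y Hy. simpl in Hy; rewrite in_app_iff in Hy.
    unfold open. rewrite <- !subst_open_var; auto; try (intro; subst; tauto).
    apply lc_iff, subst_lc_at; auto. apply lc_iff; apply Ht; auto.
Qed.


Inductive star : term -> term -> Prop :=
| st_refl : forall t, star t t
| st_step : forall a b c, red a b -> star b c -> star a c.

Lemma star_trans : forall a b c, star a b -> star b c -> star a c.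
Proof. induction 1; intros; auto. eapply st_step; eauto. Qed.

Lemma star_one : forall a b, red a b -> star a b.
Proof. intros; eapply st_step; eauto; constructor. Qed.

Lemma subst_id : forall t z, subst z (fvar z) t = t.
Proof. induction t; simpl; intros; f_equal; auto. eqbs. Qed.

Lemma red_abs_close : forall A b z, ~ In z (fv A) -> red (open A (fvar z)) b ->
  red (abs A) (abs (close z b)).
Proof. intros A b z Hz Hr. apply red_abs with (L := []). intros y _.
  unfold close, open. rewrite open_close; [|eapply red_lc_r; eauto].
  rewrite <- (subst_intro A 0 z (fvar y)); auto. apply red_subst; simpl; auto.
Qed.

Lemma red_jsub_close : forall A b z u, ~ In z (fv A) -> red (open A (fvar z)) b -> lc_at 0 u ->
  red (jsub A u) (jsub (close z b) u).
Proof. intros A b z u Hz Hr Hu. apply red_jsub_l with (L := []). intros y _.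
  unfold close, open. rewrite open_close; [|eapply red_lc_r; eauto].
  rewrite <- (subst_intro A 0 z (fvar y)); auto. apply red_subst; simpl; auto.
  apply lc_iff; auto.
Qed.

Lemma star_abs_gen : forall P S, star P S -> forall A z, P = open A (fvar z) -> ~ In z (fv A) ->
  star (abs A) (abs (close z S)).
Proof. induction 1; intros A z E Hz; subst.
  - unfold close, open; rewrite close_open; auto. constructor.
  - eapply st_step. apply red_abs_close; eauto.
    apply IHstar. unfold open, close. rewrite open_close. rewrite subst_id; auto.
    eapply red_lc_r; eauto. unfold close; rewrite fv_close; tauto.
Qed.

Lemma star_abs : forall A B z, ~ In z (fv A) -> ~ In z (fv B) ->
  star (open A (fvar z)) (open B (fvar z)) -> star (abs A) (abs B).
Proof. intros. assert (E : B = close z (open B (fvar z))) by (unfold close, open; rewrite close_open; auto).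
  rewrite E. eapply star_abs_gen; eauto. Qed.

Lemma star_jsub_gen : forall u P S, lc_at 0 u -> star P S -> forall A z, P = open A (fvar z) -> ~ In z (fv A) ->
  star (jsub A u) (jsub (close z S) u).
Proof. intros u P S Hu; induction 1; intros A z E Hz; subst.
  - unfold close, open; rewrite close_open; auto. constructor.
  - eapply st_step. apply red_jsub_close; eauto.
    apply IHstar. unfold open, close. rewrite open_close. rewrite subst_id; auto.
    eapply red_lc_r; eauto. unfold close; rewrite fv_close; tauto.
Qed.

Lemma star_jsub_l : forall A B u z, ~ In z (fv A) -> ~ In z (fv B) -> lc_at 0 u ->
  star (open A (fvar z)) (open B (fvar z)) -> star (jsub A u) (jsub B u).
Proof. intros. assert (E : B = close z (open B (fvar z))) by (unfold close, open; rewrite close_open; auto).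
  rewrite E. eapply star_jsub_gen; eauto. Qed.

Lemma star_app_l : forall t t' u, star t t' -> lc_at 0 u -> star (app t u) (app t' u).
Proof. induction 1; intros. constructor. eapply st_step; eauto. apply red_app_l; auto. apply lc_iff; auto. Qed.

Lemma star_app_r : forall t u u', star u u' -> lc_at 0 t -> star (app t u) (app t u').
Proof. induction 1; intros. constructor. eapply st_step; eauto. apply red_app_r; auto. apply lc_iff; auto. Qed.

Lemma star_jsub_r : forall t u u', star u u' -> lc_at 1 t -> star (jsub t u) (jsub t u').
Proof. induction 1; intros. constructor. eapply st_step; eauto. apply red_jsub_r with (L := []); auto.
  intros; apply lc_iff. apply open_lc_at_lower; simpl; auto. Qed.

Lemma star_lc : forall a b, star a b -> lc_at 0 a -> lc_at 0 b.
Proof. induction 1; auto. intros; apply IHstar. eapply red_lc_r; eauto. Qed.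

Lemma red_subst_r : forall u u', red u u' -> forall t, lc t -> forall x, star (subst x u t) (subst x u' t).
Proof. intros u u' Hr. assert (Hu := red_lc_l _ _ Hr). assert (Hu' := red_lc_r _ _ Hr).
  induction 1 as [y|L t Ht IH|t1 t2 H1 IH1 H2 IH2|L t1 t2 H1 IH1 H2 IH2]; intros x; simpl.
  - eqbs. apply star_one; auto. constructor.
  - destruct (fresh_ex (x :: L ++ fv t ++ fv u ++ fv u')) as [z Hz]. simpl in Hz. rewrite !in_app_iff in Hz.
    apply star_abs with (z := z).
    + intro H; apply fv_subst in H; tauto.
    + intro H; apply fv_subst in H; tauto.
    + unfold open. rewrite <- !subst_open_var; auto; try (intro; subst; tauto). apply IH; tauto.
  - eapply star_trans. apply star_app_l. apply IH1. apply subst_lc_at; auto; apply lc_iff; auto.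
    apply star_app_r. apply IH2. apply subst_lc_at; auto; apply lc_iff; auto.
  - destruct (fresh_ex (x :: L ++ fv t1 ++ fv u ++ fv u')) as [z Hz]. simpl in Hz. rewrite !in_app_iff in Hz.
    apply star_trans with (b := jsub (subst x u' t1) (subst x u t2)). apply star_jsub_l with (z := z).
    + intro H; apply fv_subst in H; tauto.
    + intro H; apply fv_subst in H; tauto.
    + apply subst_lc_at; auto; apply lc_iff; auto.
    + unfold open. rewrite <- !subst_open_var; auto; try (intro; subst; tauto). apply IH1; tauto.
    + apply star_jsub_r. apply IH2.
      apply subst_lc_at; auto. apply (lc_at_open_inv _ 0 (fvar z)). apply lc_iff. apply H1. tauto.
Qed.

Lemma AL_red : forall vs h h', red h h' -> Forall (lc_at 0) vs -> red (app_list h vs) (app_list h' vs).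
Proof. induction vs; simpl; intros h h' Hr Hv; auto. inversion Hv; subst.
  apply IHvs; auto. apply red_app_l; auto. apply lc_iff; auto. Qed.

Lemma AL_star : forall vs h h', star h h' -> Forall (lc_at 0) vs -> star (app_list h vs) (app_list h' vs).
Proof. induction 1; intros. constructor. eapply st_step; eauto. apply AL_red; auto. Qed.

Lemma AL_red_v : forall vs1 h v v' vs2, lc_at 0 h -> Forall (lc_at 0) vs1 -> red v v' -> Forall (lc_at 0) vs2 ->
  red (app_list h (vs1 ++ v :: vs2)) (app_list h (vs1 ++ v' :: vs2)).
Proof. induction vs1; simpl; intros h v v' vs2 Hh H1 Hr H2.
  - apply AL_red; auto. apply red_app_r; auto. apply lc_iff; auto.
  - inversion H1; subst. apply IHvs1; simpl; auto.
Qed.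

Lemma jumps_abs_not_app : forall L b p q, jumps L (abs b) <> app p q.
Proof. intros L; induction L using rev_ind; simpl; intros; try discriminate.
  rewrite jumps_app; simpl; discriminate. Qed.

Lemma AL_inv : forall vs h s', red (app_list h vs) s' ->
  (exists h', red h h' /\ s' = app_list h' vs) \/
  (exists vs1 v v' vs2, vs = vs1 ++ v :: vs2 /\ red v v' /\ s' = app_list h (vs1 ++ v' :: vs2)) \/
  (exists L b v1 rest, vs = v1 :: rest /\ h = jumps L (abs b) /\ s' = app_list (jumps L (jsub b v1)) rest).
Proof. induction vs; simpl; intros h s' Hr.
  - left; eauto.
  - destruct (IHvs _ _ Hr) as [H|[H|H]].
    destruct H as [h' [H1 ->]]. 2: destruct H as [vs1 [v [v' [vs2 [-> [H2 ->]]]]]].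
    3: destruct H as [L [b [v1 [rest [-> [E ->]]]]]].
    + inversion H1; subst.
      * right; right. do 4 eexists; eauto.
      * left; eauto.
      * right; left. exists [], a, u', vs; simpl; auto.
    + right; left. exists (a :: vs1), v, v', vs2; simpl; auto.
    + exfalso; eapply jumps_abs_not_app; eauto.
Qed.


Lemma mjump_app : forall s1 s2 t, mjump (s1 ++ s2) t = mjump s2 (mjump s1 t).
Proof. induction s1 as [|[x u] s1 IH]; simpl; auto. Qed.

Lemma msubst_app : forall s1 s2 t, msubst (s1 ++ s2) t = msubst s2 (msubst s1 t).
Proof. induction s1 as [|[x u] s1 IH]; simpl; auto. Qed.

Lemma mjump_snoc : forall s x u t, mjump (s ++ [(x, u)]) t = jsub (close x (mjump s t)) u.
Proof. intros; rewrite mjump_app; auto. Qed.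

Definition xfresh (s : list (var * term)) (w : term) := forall x, In x (map fst s) -> ~ In x (fv w).
Definition ufresh (s : list (var * term)) (y : var) := forall x u, In (x, u) s -> ~ In y (fv u).
Definition ulc (s : list (var * term)) := forall x u, In (x, u) s -> lc_at 0 u.

Lemma ulc_cons : forall x u s, ulc ((x, u) :: s) -> ulc s.
Proof. unfold ulc; simpl; intros; eauto. Qed.
Lemma ufresh_cons : forall x u s y, ufresh ((x, u) :: s) y -> ufresh s y.
Proof. unfold ufresh; simpl; intros; eauto. Qed.
Lemma xfresh_cons : forall x u s w, xfresh ((x, u) :: s) w -> xfresh s w.
Proof. unfold xfresh; simpl; intros; eauto. Qed.
Lemma ulc_hd : forall x u s, ulc ((x, u) :: s) -> lc_at 0 u.
Proof. unfold ulc; simpl; intros; eauto. Qed.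
Lemma ufresh_hd : forall x u s y, ufresh ((x, u) :: s) y -> ~ In y (fv u).
Proof. unfold ufresh; simpl; intros; eauto. Qed.
Lemma xfresh_hd : forall x u s w, xfresh ((x, u) :: s) w -> ~ In x (fv w).
Proof. unfold xfresh; simpl; intros; eauto. Qed.

Lemma mjump_lc : forall s t, ulc s -> lc_at 0 t -> lc_at 0 (mjump s t).
Proof. induction s as [|[x u] s IH]; simpl; intros t Hs Ht; auto. apply IH.
  eapply ulc_cons; eauto. simpl; split. apply close_lc_at; auto. eapply ulc_hd; eauto.
Qed.

Lemma msubst_lc : forall s t, ulc s -> lc_at 0 t -> lc_at 0 (msubst s t).
Proof. induction s as [|[x u] s IH]; simpl; intros t Hs Ht; auto. apply IH.
  eapply ulc_cons; eauto. apply subst_lc_at; auto. eapply ulc_hd; eauto.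
Qed.

Lemma mjump_fv : forall s t y, In y (fv (mjump s t)) -> In y (fv t) \/ exists x u, In (x, u) s /\ In y (fv u).
Proof. induction s as [|[x u] s IH]; simpl; intros t y H; auto.
  destruct (IH _ _ H) as [H1|[x' [u' [H1 H2]]]]; [|right; eauto].
  simpl in H1; rewrite in_app_iff in H1. destruct H1 as [H1|H1].
  unfold close in H1; rewrite fv_close in H1; tauto. right; eauto.
Qed.

Lemma occ_mjump : forall s t y, ~ In y (map fst s) -> ufresh s y -> occ y (mjump s t) = occ y t.
Proof. induction s as [|[x u] s IH]; simpl; intros t y H1 H2; auto.
  rewrite IH; [|tauto|eapply ufresh_cons; eauto]. simpl.
  unfold close; rewrite occ_close; [|intro; subst; tauto].
  assert (occ y u = 0) by (apply occ_fv; eapply ufresh_hd; eauto). lia.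
Qed.

Lemma subst_mjump : forall s t z w, ~ In z (map fst s) -> ufresh s z -> xfresh s w ->
  subst z w (mjump s t) = mjump s (subst z w t).
Proof. induction s as [|[x u] s IH]; simpl; intros t z w H1 H2 H3; auto.
  rewrite IH; [|tauto|eapply ufresh_cons; eauto|eapply xfresh_cons; eauto].
  f_equal. simpl. unfold close. rewrite subst_close; [|intro; subst; tauto|eapply xfresh_hd; eauto].
  rewrite (subst_fresh u); auto. eapply ufresh_hd; eauto.
Qed.

Lemma rename_mjump_inv : forall s t x y r, rename_some x y (mjump s t) r ->
  ~ In x (map fst s) -> ~ In y (map fst s) -> ufresh s x ->
  exists t', r = mjump s t' /\ rename_some x y t t'.
Proof. induction s as [|[z u] s IH]; simpl; intros t x y r H H1 H2 H3; eauto.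
  destruct (IH _ _ _ _ H) as [T [-> HT]]; try tauto. eapply ufresh_cons; eauto.
  inversion HT; subst.
  - exists t; split; auto; apply rs_refl.
  - unfold close in H5. destruct (R_close_inv _ _ _ _ _ _ H5) as [t' [-> Ht']]; try (intro; subst; tauto).
    rewrite (R_fresh _ _ _ _ H7); [|eapply ufresh_hd; eauto].
    exists t'; split; auto.
Qed.

Lemma subst_subst : forall t x u z w, x <> z -> ~ In x (fv w) -> ~ In z (fv u) ->
  subst z w (subst x u t) = subst x u (subst z w t).
Proof. induction t; simpl; intros; try (f_equal; auto; fail).
  eqbs; try rewrite Nat.eqb_refl; auto; try (rewrite subst_fresh; auto).
Qed.

Lemma subst_msubst : forall s t z w, ~ In z (map fst s) -> ufresh s z -> xfresh s w ->
  subst z w (msubst s t) = msubst s (subst z w t).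
Proof. induction s as [|[x u] s IH]; simpl; intros t z w H1 H2 H3; auto.
  rewrite IH; [|tauto|eapply ufresh_cons; eauto|eapply xfresh_cons; eauto].
  f_equal. rewrite subst_subst; auto. eapply xfresh_hd; eauto. eapply ufresh_hd; eauto.
Qed.

Lemma msubst_fresh : forall s v, xfresh s v -> msubst s v = v.
Proof. induction s as [|[x u] s IH]; simpl; intros v H; auto.
  rewrite subst_fresh. apply IH. eapply xfresh_cons; eauto. eapply xfresh_hd; eauto. Qed.

Lemma msubst_abs : forall s b, msubst s (abs b) = abs (msubst s b).
Proof. induction s as [|[x u] s IH]; simpl; auto. Qed.
Lemma msubst_app' : forall s a b, msubst s (app a b) = app (msubst s a) (msubst s b).
Proof. induction s as [|[x u] s IH]; simpl; auto. Qed.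
Lemma msubst_jsub : forall s a b, msubst s (jsub a b) = jsub (msubst s a) (msubst s b).
Proof. induction s as [|[x u] s IH]; simpl; auto. Qed.
Lemma msubst_jumps : forall s L X, msubst s (jumps L X) = jumps (map (msubst s) L) (msubst s X).
Proof. induction s as [|[x u] s IH]; simpl; intros. rewrite map_id; auto.
  rewrite jumps_subst, IH, map_map; auto. Qed.

Lemma msubst_red : forall s t t', ulc s -> red t t' -> red (msubst s t) (msubst s t').
Proof. induction s as [|[x u] s IH]; simpl; intros t t' Hs Hr; auto.
  apply IH. eapply ulc_cons; eauto. apply red_subst; auto. eapply ulc_hd; eauto. Qed.

Lemma msubst_star : forall s t t', ulc s -> star t t' -> star (msubst s t) (msubst s t').
Proof. intros s t t' Hs; induction 1. constructor. eapply st_step; eauto. apply msubst_red; auto. Qed.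

Lemma close_jumps_inv : forall L' k x B b, close_rec k x B = jumps L' (abs b) ->
  exists L'' b'', B = jumps L'' (abs b'') /\
    forall v, ~ In x (fv v) -> close_rec k x (jumps L'' (jsub b'' v)) = jumps L' (jsub b v).
Proof. intros L'; induction L' using rev_ind; simpl; intros k y B b H.
  - destruct B; simpl in H; try discriminate. destruct (Nat.eqb y x); discriminate.
    inversion H; subst. exists [], B; split; auto. intros v Hv; simpl. f_equal. apply close_fresh; auto.
  - rewrite jumps_app in H; simpl in H.
    destruct B; simpl in H; try discriminate. destruct (Nat.eqb y x0); discriminate.
    inversion H; subst. destruct (IHL' _ _ _ _ H1) as [L'' [b'' [-> E]]].
    exists (L'' ++ [B2]), b''. rewrite !jumps_app; simpl. split; auto.
    intros v Hv. rewrite jumps_app; simpl. rewrite E; auto. rewrite jumps_app; auto.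
Qed.

Lemma mjump_dB_inv : forall s t L b, mjump s t = jumps L (abs b) ->
  exists L0 b0, t = jumps L0 (abs b0) /\
   forall v, xfresh s v -> jumps L (jsub b v) = mjump s (jumps L0 (jsub b0 v)).
Proof. intros s; induction s using rev_ind; simpl; intros t L b H.
  - exists L, b; split; auto.
  - destruct x as [x u]. rewrite mjump_snoc in H. symmetry in H.
    destruct (jumps_snoc_inv _ _ _ _ H) as [L' [-> E]].
    symmetry in E. unfold close in E. destruct (close_jumps_inv _ _ _ _ _ E) as [L'' [b'' [E2 E3]]].
    destruct (IHs _ _ _ E2) as [L0 [b0 [-> E4]]].
    exists L0, b0; split; auto. intros v Hv.
    rewrite mjump_snoc, jumps_app; simpl. rewrite <- E4.
    unfold close. rewrite E3; auto. apply Hv. rewrite map_app; simpl; rewrite in_app_iff; simpl; auto.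
    intros z Hz; apply Hv. rewrite map_app, in_app_iff; auto.
Qed.


Definition JF (s : list (var * term)) := forall x u y w, In (x, u) s -> In (y, w) s -> ~ In x (fv w).
Definition Fs (s : list (var * term)) := flat_map (fun p => fv (snd p)) s.

Lemma Fs_spec : forall s y x u, In (x, u) s -> ~ In y (Fs s) -> ~ In y (fv u).
Proof. intros. intro H1; apply H0. unfold Fs; apply in_flat_map. exists (x, u); auto. Qed.

Lemma ufresh_Fs : forall s y, ~ In y (Fs s) -> ufresh s y.
Proof. intros s y H x u Hi. eapply Fs_spec; eauto. Qed.

Lemma snoc_facts : forall s x u, NoDup (map fst (s ++ [(x, u)])) -> JF (s ++ [(x, u)]) -> ulc (s ++ [(x, u)]) ->
  NoDup (map fst s) /\ JF s /\ ulc s /\ ~ In x (map fst s) /\ ufresh s x /\ xfresh s u /\ ~ In x (fv u) /\ lc_at 0 u.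
Proof. intros s x u H1 H2 H3. rewrite map_app in H1. simpl in H1.
  assert (Hi : forall p, In p s -> In p (s ++ [(x, u)])) by (intros; rewrite in_app_iff; auto).
  assert (Hx : In (x, u) (s ++ [(x, u)])) by (rewrite in_app_iff; simpl; auto).
  repeat split.
  - apply NoDup_remove_1 in H1. rewrite app_nil_r in H1; auto.
  - intros a b c d Ha Hc. eapply H2; eauto.
  - intros a b Ha. eapply H3; eauto.
  - apply NoDup_remove_2 in H1. rewrite app_nil_r in H1; auto.
  - intros a b Ha. eapply H2; eauto.
  - intros a Ha. apply in_map_iff in Ha. destruct Ha as [[a' b'] [E Ha]]; simpl in E; subst. eapply H2; eauto.
  - eapply H2; eauto.
  - eapply H3; eauto.
Qed.

Definition inv_res (s : list (var * term)) (t h' : term) (A : list var) : Prop :=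
 (exists t', red t t' /\ h' = mjump s t') \/
 (exists s1 s2 x u u', s = s1 ++ (x, u) :: s2 /\ red u u' /\ h' = mjump (s1 ++ (x, u') :: s2) t) \/
 (exists s1 s2 x u, s = s1 ++ (x, u) :: s2 /\ occ x t = 0 /\ h' = mjump (s1 ++ s2) t) \/
 (exists s1 s2 x u, s = s1 ++ (x, u) :: s2 /\ occ x t = 1 /\ h' = mjump (s1 ++ s2) (subst x u t)) \/
 (exists s1 s2 x u y t', s = s1 ++ (x, u) :: s2 /\ ~ In y A /\ 2 <= occ x t /\ rename_some x y t t' /\
    1 <= occ y t' /\ occ y t' <= occ x t - 1 /\ h' = mjump (s1 ++ (x, u) :: (y, u) :: s2) t').

Lemma red_jsub_inv : forall t u h', red (jsub t u) h' ->
 (exists z, ~ In z (fv t ++ fv u) /\ occ z (open t (fvar z)) = 0 /\ h' = open t (fvar z)) \/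
 (exists z, ~ In z (fv t ++ fv u) /\ occ z (open t (fvar z)) = 1 /\ h' = subst z u (open t (fvar z))) \/
 (exists z y s', ~ In z (fv t ++ fv u) /\ ~ In y (fv t ++ fv u) /\ z <> y /\
    2 <= occ z (open t (fvar z)) /\ rename_some z y (open t (fvar z)) s' /\
    1 <= occ y s' /\ occ y s' <= occ z (open t (fvar z)) - 1 /\ h' = jsub (close y (jsub (close z s') u)) u) \/
 (exists L t'', (forall z, ~ In z L -> red (open t (fvar z)) (open t'' (fvar z))) /\ h' = jsub t'' u) \/
 (exists u', red u u' /\ h' = jsub t u').
Proof. intros t u h' H; inversion H; subst.
  - left; eexists; eauto.
  - right; left; eexists; eauto.
  - right; right; left; do 3 eexists; repeat split; eauto.
  - right; right; right; left; do 2 eexists; eauto.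
  - right; right; right; right; eexists; eauto.
Qed.

Lemma mjump_red_inv : forall s t A h', NoDup (map fst s) -> JF s -> ulc s -> lc_at 0 t ->
  red (mjump s t) h' -> inv_res s t h' A.
Proof.
  intros s; induction s as [|[x u] s IH] using rev_ind; intros t A h' ND HJ HL Ht Hr.
  - left; exists h'; auto.
  - destruct (snoc_facts s x u ND HJ HL) as [ND' [HJ' [HL' [Hxs [Hux [Hxu [Hxu' Hu]]]]]]].
    rewrite mjump_snoc in Hr. remember (mjump s t) as B eqn:EB.
    assert (HB : lc_at 0 B) by (rewrite EB; apply mjump_lc; auto).
    assert (HcB : lc_at 1 (close x B)) by (apply close_lc_at; auto).
    assert (Eo : occ x B = occ x t) by (rewrite EB; apply occ_mjump; auto).
    assert (Eb : bocc 0 (close x B) = occ x t).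
    { unfold close; rewrite bocc_close, (bocc_lc_at B 0 0); auto. }
    apply red_jsub_inv in Hr.
    destruct Hr as [[z [Hz [Ho ->]]]|[[z [Hz [Ho ->]]]|[[z [y0 [s' [Hz [Hy0 [Hzy [Ho [Hrs [Hy1 [Hy2 ->]]]]]]]]]]
       |[[L [t'' [Hred ->]]]|[u' [Hred ->]]]]]].
    +
      rewrite in_app_iff in Hz.
      destruct (w_res (close x B) z) as [Hb E]; try tauto. rewrite E.
      right; right; left. exists s, [], x, u. split; auto. split. lia.
      rewrite app_nil_r, <- EB. unfold close. apply close_fresh. apply occ_fv. lia.
    +
      rewrite in_app_iff in Hz. rewrite occ_open_fresh in Ho; [|tauto].
      unfold open; rewrite subst_intro; [|tauto]. unfold close; rewrite open_close; auto.
      right; right; right; left. exists s, [], x, u. split; auto. split. lia.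
      rewrite app_nil_r, EB. apply subst_mjump; auto.
    +
      destruct (fresh_ex (A ++ fv B ++ fv u ++ [x] ++ map fst s ++ Fs s)) as [y1 Hy1'].
      rewrite !in_app_iff in Hy1'. simpl in Hy1'.
      rewrite occ_open_fresh in Ho, Hy2; [|rewrite in_app_iff in Hz; tauto|rewrite in_app_iff in Hz; tauto].
      destruct (c_rename (close x B) u z y0 s' HcB Hz Hy0 Hzy Hrs x y1) as [s1 [R1 [O1 E1]]].
      * rewrite in_app_iff; unfold close; rewrite fv_close; tauto.
      * rewrite in_app_iff; unfold close; rewrite fv_close; tauto.
      * intro; subst; tauto.
      * unfold close, open in R1. rewrite open_close, subst_id, EB in R1; auto.
        destruct (rename_mjump_inv s t x y1 s1 R1) as [t' [-> Rt]]; auto; try tauto.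
        rewrite occ_mjump in O1; try tauto. 2: apply ufresh_Fs; tauto.
        right; right; right; right. exists s, [], x, u, y1, t'.
        split; auto. split; [tauto|]. split; [lia|]. split; auto. split; [lia|]. split; [lia|].
        change (cres z y0 s' u = mjump (s ++ [(x, u); (y1, u)]) t'). rewrite E1.
        rewrite mjump_app. reflexivity.
    +
      destruct (fresh_ex (L ++ fv B ++ fv t'' ++ [x])) as [z Hz].
      rewrite !in_app_iff in Hz; simpl in Hz.
      assert (Hr1 : red (subst x (fvar z) B) (open t'' (fvar z))).
      { unfold close, open in Hred. rewrite <- (open_close B 0 x) by auto. apply Hred; tauto. }
      assert (Hxt : ~ In x (fv t'')).
      { intro H. apply (fv_open_incl _ 0 (fvar z)) in H. apply (red_fv _ _ Hr1) in H.
        apply fv_subst in H. simpl in H. intuition. }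
      assert (Hr2 := red_subst _ _ Hr1 z (fvar x) I).
      rewrite subst_var_back in Hr2; [|tauto]. unfold open in Hr2; rewrite subst_intro in Hr2; [|tauto].
      assert (Et : t'' = close x (open_rec 0 (fvar x) t'')) by (unfold close; rewrite close_open; auto).
      rewrite Et.
      rewrite EB in Hr2. destruct (IH t (x :: fv u ++ A) _ ND' HJ' HL' Ht Hr2) as
        [[t' [H1 E]]|[[s1 [s2 [x' [u1 [u1' [Es [H2 E]]]]]]]|[[s1 [s2 [x' [u1 [Es [H2 E]]]]]]
        |[[s1 [s2 [x' [u1 [Es [H2 E]]]]]]|[s1 [s2 [x' [u1 [y [t' [Es [H2 [H3 [H4 [H5 [H6 E]]]]]]]]]]]]]]]];
        rewrite E; rewrite <- mjump_snoc.
      * left. exists t'; auto.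
      * right; left. exists s1, (s2 ++ [(x, u)]), x', u1, u1'. subst s. rewrite <- !app_assoc. auto.
      * right; right; left. exists s1, (s2 ++ [(x, u)]), x', u1. subst s. rewrite <- !app_assoc. auto.
      * right; right; right; left. exists s1, (s2 ++ [(x, u)]), x', u1. subst s. rewrite <- !app_assoc. auto.
      * right; right; right; right. exists s1, (s2 ++ [(x, u)]), x', u1, y, t'. subst s.
        rewrite <- !app_assoc. simpl in H2; rewrite in_app_iff in H2. intuition.
    +
      right; left. exists s, [], x, u, u'. split; auto. split; auto. rewrite mjump_snoc, EB; auto.
Qed.


Section MS.
Variable T : Type.
Variable R : T -> T -> Prop.
Definition MR (l' l : list T) := exists A B a X, l = A ++ a :: B /\ l' = A ++ X ++ B /\ Forall (fun x => R x a) X.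

Lemma MR_cons_inv : forall N a M, MR N (a :: M) ->
  (exists X, N = X ++ M /\ Forall (fun x => R x a) X) \/ (exists M', N = a :: M' /\ MR M' M).
Proof. intros N a M [A [B [b [X [E1 [E2 HX]]]]]]. destruct A as [|c A]; simpl in *.
  - inversion E1; subst. left; eauto.
  - inversion E1; subst. right. exists (A ++ X ++ B); split; auto. exists A, B, b, X; auto.
Qed.

Lemma MR_acc_cons : forall a, Acc R a -> forall M, Acc MR M -> Acc MR (a :: M).
Proof. induction 1 as [a _ IHa]. intros M HM. induction HM as [M HM IHM].
  constructor. intros N HN. destruct (MR_cons_inv _ _ _ HN) as [[X [-> HX]]|[M' [-> HM']]].
  - clear HN. induction X as [|x X IHX]; simpl. constructor; auto.
    inversion HX; subst. apply IHa; auto.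
  - apply IHM; auto.
Qed.

Lemma MR_acc : forall l, Forall (Acc R) l -> Acc MR l.
Proof. induction 1. constructor. intros N [A [B [b [X [E _]]]]]. destruct A; discriminate.
  apply MR_acc_cons; auto. Qed.
End MS.

Definition Rr (a b : term) := red b a.
Definition eltR (p q : term * nat) := clos_trans term Rr (fst p) (fst q) \/ (fst p = fst q /\ snd p < snd q).

Lemma elt_acc : forall u, Acc (clos_trans term Rr) u -> forall n, Acc eltR (u, n).
Proof. induction 1 as [u _ IHu]. intros n. induction n as [n IHn] using (well_founded_induction lt_wf).
  constructor. intros [u' n'] [H|[H1 H2]]; simpl in *. apply IHu; auto. subst. apply IHn; auto. Qed.

Lemma SN_elt : forall u n, SN u -> Acc eltR (u, n).
Proof. intros. apply elt_acc. apply Acc_clos_trans. exact H. Qed.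

Lemma star_plus : forall a b, star a b -> a = b \/ clos_trans term Rr b a.
Proof. induction 1. auto. right. destruct IHstar as [->|H1]. apply t_step; auto.
  eapply t_trans; eauto. apply t_step; auto. Qed.

Lemma SN_red : forall u u', SN u -> red u u' -> SN u'.
Proof. intros u u' H Hr. destruct H. apply H; auto. Qed.

Lemma subst_rename_var : forall T x x' u, ~ In x' (fv T) -> subst x' u (subst x (fvar x') T) = subst x u T.
Proof. induction T as [i|y|T IH|T1 IH1 T2 IH2|T1 IH1 T2 IH2]; simpl; intros a a' u H.
- auto.
- destruct (Nat.eqb_spec a y); simpl. rewrite Nat.eqb_refl; auto. destruct (Nat.eqb_spec a' y); auto. subst; tauto.
- f_equal; auto.
- rewrite in_app_iff in H; f_equal; [apply IH1|apply IH2]; tauto.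
- rewrite in_app_iff in H; f_equal; [apply IH1|apply IH2]; tauto.
Qed.

Lemma msubst_mid_eq : forall s1 s2 x u t, ~ In x (map fst s1) -> ufresh s1 x -> xfresh s1 u ->
  msubst (s1 ++ (x, u) :: s2) t = msubst s2 (msubst s1 (subst x u t)).
Proof. intros. rewrite msubst_app; simpl. rewrite subst_msubst; auto. Qed.

Lemma msubst_w : forall s1 s2 x u t, ~ In x (map fst s1) -> ufresh s1 x -> xfresh s1 u -> occ x t = 0 ->
  msubst (s1 ++ s2) t = msubst (s1 ++ (x, u) :: s2) t.
Proof. intros. rewrite msubst_mid_eq, msubst_app; auto. rewrite subst_fresh; auto. apply occ_fv; auto. Qed.

Lemma msubst_d : forall s1 s2 x u t, ~ In x (map fst s1) -> ufresh s1 x -> xfresh s1 u ->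
  msubst (s1 ++ s2) (subst x u t) = msubst (s1 ++ (x, u) :: s2) t.
Proof. intros. rewrite msubst_mid_eq, msubst_app; auto. Qed.

Lemma msubst_c : forall s1 s2 x y u t t', ~ In x (map fst s1) -> ufresh s1 x -> xfresh s1 u ->
  ~ In y (map fst s1) -> ufresh s1 y -> ~ In y (fv t) -> ~ In y (fv u) -> rename_some x y t t' ->
  msubst (s1 ++ (x, u) :: (y, u) :: s2) t' = msubst (s1 ++ (x, u) :: s2) t.
Proof. intros. rewrite msubst_mid_eq; auto. rewrite msubst_app; simpl.
  rewrite subst_msubst; auto. rewrite (R_subst_back _ _ _ _ H6); auto.
  rewrite subst_msubst; auto.
Qed.

Lemma msubst_u : forall s1 s2 x u u' t, ulc s1 -> ulc s2 -> lc_at 0 t -> red u u' ->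
  star (msubst (s1 ++ (x, u) :: s2) t) (msubst (s1 ++ (x, u') :: s2) t).
Proof. intros. rewrite !msubst_app; simpl. apply msubst_star; auto.
  apply red_subst_r; auto. apply lc_iff, msubst_lc; auto. Qed.


Definition Good (s : list (var * term)) (t : term) (vs : list term) : Prop :=
  NoDup (map fst s) /\
  (forall a d, In a (map fst s) -> In d (map snd s) -> ~ In a (fv d)) /\
  (forall d, In d (map snd s) -> lc_at 0 d /\ SN d) /\
  (forall a v, In a (map fst s) -> In v vs -> ~ In a (fv v)) /\
  lc_at 0 t /\ Forall (lc_at 0) vs.

Definition meas (s : list (var * term)) (t : term) := map (fun p : var * term => (snd p, occ (fst p) t)) s.

Lemma in_fst : forall (s : list (var * term)) x u, In (x, u) s -> In x (map fst s).
Proof. intros. apply (in_map fst) in H; auto. Qed.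
Lemma in_snd : forall (s : list (var * term)) x u, In (x, u) s -> In u (map snd s).
Proof. intros. apply (in_map snd) in H; auto. Qed.

Lemma G_JF : forall s t vs, Good s t vs -> JF s.
Proof. intros s t vs G x u y w H1 H2. destruct G as [_ [HF _]]. apply HF. eapply in_fst; eauto. eapply in_snd; eauto. Qed.
Lemma G_ulc : forall s t vs, Good s t vs -> ulc s.
Proof. intros s t vs G x u H. destruct G as [_ [_ [HL _]]]. apply HL. eapply in_snd; eauto. Qed.

Lemma G_args : forall s t vs, Good s t vs -> forall d, In d (map snd s) -> lc_at 0 d /\ SN d.
Proof. intros s t vs G. apply G. Qed.

Lemma mkGood : forall s t vs, NoDup (map fst s) ->
  (forall a d, In a (map fst s) -> In d (map snd s) -> ~ In a (fv d)) ->
  (forall d, In d (map snd s) -> lc_at 0 d /\ SN d) ->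
  (forall a v, In a (map fst s) -> In v vs -> ~ In a (fv v)) ->
  lc_at 0 t -> Forall (lc_at 0) vs -> Good s t vs.
Proof. unfold Good; intros; tauto. Qed.

Lemma meas_acc : forall s t, (forall d, In d (map snd s) -> lc_at 0 d /\ SN d) -> Acc (MR _ eltR) (meas s t).
Proof. intros. apply MR_acc. apply Forall_forall. intros [u n] Hi. unfold meas in Hi.
  apply in_map_iff in Hi. destruct Hi as [[x u'] [E Hi]]. simpl in E. inversion E; subst.
  apply SN_elt. apply H. eapply in_snd; eauto. Qed.

Lemma meas_app : forall s1 s2 t, meas (s1 ++ s2) t = meas s1 t ++ meas s2 t.
Proof. intros; unfold meas; apply map_app. Qed.

Lemma meas_ext : forall s t t', (forall x, In x (map fst s) -> occ x t' = occ x t) -> meas s t' = meas s t.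
Proof. intros. unfold meas. apply map_ext_in. intros [x u] Hi. simpl. f_equal. apply H. eapply in_fst; eauto. Qed.

Ltac mapsimpl := rewrite ?map_app in *; simpl in *; rewrite ?in_app_iff in *; simpl in *; rewrite ?in_app_iff in *.


Lemma ND_app_iff : forall (l1 l2 : list var), NoDup (l1 ++ l2) <-> NoDup l1 /\ NoDup l2 /\ (forall a, In a l1 -> ~ In a l2).
Proof. induction l1; simpl; intros.
  - split. intros; repeat split; auto; constructor. tauto.
  - rewrite !NoDup_cons_iff, IHl1, in_app_iff. firstorder. subst; auto.
Qed.

Lemma fst_repl : forall (s1 s2 : list (var * term)) x y u u', map fst (s1 ++ (x, u) :: s2) = map fst (s1 ++ (y, u') :: s2) -> True.
Proof. auto. Qed.

Lemma snd_mid : forall (s1 s2 : list (var * term)) x u d,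
  In d (map snd (s1 ++ (x, u) :: s2)) <-> In d (map snd s1) \/ d = u \/ In d (map snd s2).
Proof. intros. rewrite map_app, in_app_iff; simpl. intuition. Qed.

Lemma fst_mid : forall (s1 s2 : list (var * term)) x u a,
  In a (map fst (s1 ++ (x, u) :: s2)) <-> In a (map fst s1) \/ a = x \/ In a (map fst s2).
Proof. intros. rewrite map_app, in_app_iff; simpl. intuition. Qed.

Lemma snd_cat : forall (s1 s2 : list (var * term)) d, In d (map snd (s1 ++ s2)) <-> In d (map snd s1) \/ In d (map snd s2).
Proof. intros. rewrite map_app, in_app_iff. tauto. Qed.
Lemma fst_cat : forall (s1 s2 : list (var * term)) d, In d (map fst (s1 ++ s2)) <-> In d (map fst s1) \/ In d (map fst s2).
Proof. intros. rewrite map_app, in_app_iff. tauto. Qed.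

Lemma Good_u : forall s1 s2 x u u' t vs, Good (s1 ++ (x, u) :: s2) t vs -> red u u' -> Good (s1 ++ (x, u') :: s2) t vs.
Proof. intros s1 s2 x u u' t vs [ND [HF [HL [HV [Ht Hvs]]]]] Hr.
  assert (E : map fst (s1 ++ (x, u') :: s2) = map fst (s1 ++ (x, u) :: s2)) by (rewrite !map_app; reflexivity).
  apply mkGood; try rewrite E; auto.
  - intros a d Ha Hd. apply snd_mid in Hd. destruct Hd as [Hd|[->|Hd]].
    + apply HF; auto. apply snd_mid; auto.
    + intro Hf. apply (red_fv _ _ Hr) in Hf. revert Hf. apply HF; auto. apply snd_mid; auto.
    + apply HF; auto. apply snd_mid; auto.
  - intros d Hd. apply snd_mid in Hd. destruct Hd as [Hd|[->|Hd]].
    + apply HL. apply snd_mid; auto.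
    + split. eapply red_lc_r; eauto. eapply SN_red; eauto. apply HL. apply snd_mid; auto.
    + apply HL. apply snd_mid; auto.
Qed.

Lemma Good_rm : forall s1 s2 x u t t' vs, Good (s1 ++ (x, u) :: s2) t vs -> lc_at 0 t' -> Good (s1 ++ s2) t' vs.
Proof. intros s1 s2 x u t t' vs [ND [HF [HL [HV [Ht Hvs]]]]] Ht'.
  apply mkGood; auto.
  - rewrite map_app in *. simpl in ND. apply NoDup_remove_1 in ND; auto.
  - intros a d Ha Hd. apply fst_cat in Ha. apply snd_cat in Hd. apply HF.
    apply fst_mid; tauto. apply snd_mid; tauto.
  - intros d Hd. apply snd_cat in Hd. apply HL. apply snd_mid; tauto.
  - intros a v Ha Hv. apply fst_cat in Ha. apply HV; auto. apply fst_mid; tauto.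
Qed.

Lemma Good_c : forall s1 s2 x u y t t' vs, Good (s1 ++ (x, u) :: s2) t vs ->
  ~ In y (map fst (s1 ++ (x, u) :: s2)) -> (forall d, In d (map snd (s1 ++ (x, u) :: s2)) -> ~ In y (fv d)) ->
  (forall v, In v vs -> ~ In y (fv v)) -> lc_at 0 t' -> Good (s1 ++ (x, u) :: (y, u) :: s2) t' vs.
Proof. intros s1 s2 x u y t t' vs [ND [HF [HL [HV [Ht Hvs]]]]] Hy1 Hy2 Hy3 Ht'.
  assert (Ey : forall a, In a (map fst (s1 ++ (x, u) :: (y, u) :: s2)) <-> a = y \/ In a (map fst (s1 ++ (x, u) :: s2))).
  { intros a. rewrite !map_app, !in_app_iff; simpl. intuition. }
  assert (Ed : forall d, In d (map snd (s1 ++ (x, u) :: (y, u) :: s2)) <-> In d (map snd (s1 ++ (x, u) :: s2))).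
  { intros d. rewrite !map_app, !in_app_iff; simpl. intuition. }
  apply mkGood; auto.
  - rewrite map_app in *. simpl in *. apply ND_app_iff in ND. destruct ND as [N1 [N2 N3]].
    rewrite in_app_iff in Hy1. simpl in Hy1.
    apply ND_app_iff. split; [|split]; auto.
    + inversion N2 as [|a l Hxl N2']; subst. constructor; [simpl; intros [E|E]; [subst; tauto|tauto]|].
      constructor; [tauto|auto].
    + intros a Ha Hb. simpl in Hb.
      destruct Hb as [E|[E|Hb]]; [apply (N3 a Ha); simpl; auto| subst; tauto | apply (N3 a Ha); simpl; auto].
  - intros a d Ha Hd. apply Ey in Ha. apply Ed in Hd. destruct Ha as [->|Ha]; auto.
  - intros d Hd. apply HL. apply Ed; auto.
  - intros a v Ha Hv. apply Ey in Ha. destruct Ha as [->|Ha]; auto.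
Qed.

Lemma mid_facts : forall s1 s2 x u t vs, Good (s1 ++ (x, u) :: s2) t vs ->
  ~ In x (map fst s1) /\ ~ In x (map fst s2) /\ ufresh s1 x /\ xfresh s1 u /\ ulc s1 /\ ulc s2 /\
  lc_at 0 u /\ ~ In x (fv u) /\ SN u.
Proof. intros s1 s2 x u t vs [ND [HF [HL _]]]. rewrite !map_app in *. simpl in *.
  apply NoDup_remove_2 in ND. rewrite in_app_iff in ND.
  assert (Hx : In x (map fst s1 ++ x :: map fst s2)) by (apply in_app_iff; simpl; auto).
  assert (Hu : In u (map snd s1 ++ u :: map snd s2)) by (apply in_app_iff; simpl; auto).
  split; [intro; apply ND; auto|].
  split; [intro; apply ND; auto|].
  split; [intros a b Hi; apply HF; auto; apply in_snd in Hi; apply in_app_iff; auto|].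
  split; [intros a Ha; apply HF; auto; apply in_app_iff; auto|].
  split; [intros a b Hi; apply HL; apply in_snd in Hi; apply in_app_iff; auto|].
  split; [intros a b Hi; apply HL; apply in_snd in Hi; apply in_app_iff; simpl; auto|].
  split; [apply HL; auto|].
  split; [apply HF; auto|].
  apply HL; auto.
Qed.

Lemma main : forall p, Acc (clos_trans term Rr) p -> forall M, Acc (MR _ eltR) M ->
  forall s t vs, Good s t vs -> p = app_list (msubst s t) vs -> M = meas s t ->
  SN (app_list (mjump s t) vs).
Proof.
  intros p Hp. induction Hp as [p _ IHp]. intros M HM. induction HM as [M _ IHM].
  intros s t vs G Ep EM. subst p M.
  assert (G' := G). destruct G' as [ND [HF [HL [HV [Ht Hvs]]]]].
  assert (HJ := G_JF _ _ _ G). assert (HU := G_ulc _ _ _ G).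
  assert (Hp : lc_at 0 (msubst s t)) by (apply msubst_lc; auto).
  unfold SN; constructor; intros s' Hr; fold (SN s').
  destruct (AL_inv _ _ _ Hr) as [[h' [Hh ->]]|[[vs1 [v [v' [vs2 [Evs [Hv ->]]]]]]|[L [b [v1 [rest [Evs [Eh ->]]]]]]]].
  - set (A := fv t ++ Fs s ++ map fst s ++ flat_map fv vs).
    destruct (mjump_red_inv s t A h' ND HJ HU Ht Hh) as
        [[t' [H1 ->]]|[[s1 [s2 [x [u [u' [Es [H2 ->]]]]]]]|[[s1 [s2 [x [u [Es [H2 ->]]]]]]
        |[[s1 [s2 [x [u [Es [H2 ->]]]]]]|[s1 [s2 [x [u [y [t' [Es [H2 [H3 [H4 [H5 [H6 ->]]]]]]]]]]]]]]]].
    +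
      apply (IHp (app_list (msubst s t') vs)) with (M := meas s t'); try reflexivity; try exact G2; try exact E.
      * apply t_step. unfold Rr. apply AL_red; auto. apply msubst_red; auto.
      * apply meas_acc; eapply G_args; eauto.
      * apply mkGood; try assumption. eapply red_lc_r; eauto.
    +
      subst s. destruct (mid_facts _ _ _ _ _ _ G) as [F1 [F2 [F3 [F4 [F5 [F6 [F7 [F8 F9]]]]]]]].
      assert (Hu' := red_lc_r _ _ H2).
      assert (G2 : Good (s1 ++ (x, u') :: s2) t vs) by (eapply Good_u; eauto).
      destruct (star_plus _ _ (AL_star _ _ _ (msubst_u s1 s2 x u u' t F5 F6 Ht H2) Hvs)) as [E|E].
      * apply (IHM (meas (s1 ++ (x, u') :: s2) t)) with (s := s1 ++ (x, u') :: s2) (t := t) (vs := vs); try reflexivity; try exact G2; try exact E.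
        exists (meas s1 t), (meas s2 t), (u, occ x t), [(u', occ x t)].
        rewrite !meas_app. split; auto. split; auto. constructor; [|constructor].
        left. simpl. apply t_step. exact H2.
      * apply (IHp _ E (meas (s1 ++ (x, u') :: s2) t)); try reflexivity; try exact G2. apply meas_acc; eapply G_args; eauto.
    +
      subst s. destruct (mid_facts _ _ _ _ _ _ G) as [F1 [F2 [F3 [F4 [F5 [F6 [F7 [F8 F9]]]]]]]].
      assert (G2 : Good (s1 ++ s2) t vs) by (eapply Good_rm; eauto).
      apply (IHM (meas (s1 ++ s2) t)) with (s := s1 ++ s2) (t := t) (vs := vs); try reflexivity; try exact G2; try exact E.
      * exists (meas s1 t), (meas s2 t), (u, occ x t), []. rewrite !meas_app. auto.
      * rewrite (msubst_w s1 s2 x u t); auto.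
    +
      subst s. destruct (mid_facts _ _ _ _ _ _ G) as [F1 [F2 [F3 [F4 [F5 [F6 [F7 [F8 F9]]]]]]]].
      assert (G2 : Good (s1 ++ s2) (subst x u t) vs) by (eapply Good_rm; eauto; apply subst_lc_at; auto).
      apply (IHM (meas (s1 ++ s2) (subst x u t))) with (s := s1 ++ s2) (t := subst x u t) (vs := vs); try reflexivity; try exact G2; try exact E.
      * exists (meas s1 t), (meas s2 t), (u, occ x t), []. rewrite !meas_app. split; auto. split; auto.
        simpl. f_equal; apply meas_ext; intros z Hz; apply occ_subst_other.
        intro; subst; tauto. apply HF; mapsimpl; tauto.
        intro; subst; tauto. apply HF; mapsimpl; tauto.
      * rewrite msubst_d; auto.
    +
      subst s. destruct (mid_facts _ _ _ _ _ _ G) as [F1 [F2 [F3 [F4 [F5 [F6 [F7 [F8 F9]]]]]]]].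
      unfold A in H2. mapsimpl.
      assert (Hyt : ~ In y (fv t)) by tauto.
      assert (Hyu : ~ In y (fv u)) by (intro; apply H2; right; left; unfold Fs; apply in_flat_map;
        exists (x, u); mapsimpl; auto).
      assert (Hys : forall a d, In (a, d) (s1 ++ (x, u) :: s2) -> ~ In y (fv d)).
      { intros a d Hi Hy. apply H2. right; left. unfold Fs; apply in_flat_map. exists (a, d); auto. }
      assert (Hyv : forall v, In v vs -> ~ In y (fv v)).
      { intros v Hi Hy. apply H2. do 3 right. apply in_flat_map. eauto. }
      assert (Hxy : x <> y) by (intro; subst; tauto).
      assert (Hocc : occ x t' + occ y t' = occ x t).
      { rewrite (R_occ_sum _ _ _ _ H4 Hxy). assert (occ y t = 0) by (apply occ_fv; auto). lia. }
      assert (G2 : Good (s1 ++ (x, u) :: (y, u) :: s2) t' vs).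
      { eapply Good_c; eauto.
        - rewrite fst_mid. intros [Hy|[Hy|Hy]]; [|subst; tauto|]; apply H2; tauto.
        - intros d Hd. apply in_map_iff in Hd. destruct Hd as [[a d'] [Ed Hd]]; simpl in Ed; subst. eauto.
        - eapply R_lc; eauto. }
      apply (IHM (meas (s1 ++ (x, u) :: (y, u) :: s2) t')) with (s := s1 ++ (x, u) :: (y, u) :: s2) (t := t') (vs := vs); try reflexivity; try exact G2; try exact E.
      * exists (meas s1 t), (meas s2 t), (u, occ x t), [(u, occ x t'); (u, occ y t')].
        rewrite !meas_app. split; auto. split.
        -- simpl. f_equal; [|f_equal; f_equal]; apply meas_ext; intros z Hz; apply (R_occ_other _ _ _ _ H4);
           try (intro; subst; tauto).
        -- constructor; [|constructor; [|constructor]]; right; simpl; split; auto; lia.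
      * rewrite (msubst_c s1 s2 x y u t t'); auto.
        intro Hy; apply H2; tauto.
        intros a d Hi. apply (Hys a d). rewrite in_app_iff; auto.
  -
    subst vs. apply (IHp (app_list (msubst s t) (vs1 ++ v' :: vs2))) with (M := meas s t); try reflexivity; try exact G2; try exact E.
    + apply t_step. unfold Rr. apply Forall_app in Hvs. destruct Hvs as [Hv1 Hv2]. inversion Hv2; subst.
      apply AL_red_v; auto.
    + apply meas_acc; eapply G_args; eauto.
    + apply mkGood; try assumption.
      * intros a w Ha Hw. apply in_app_iff in Hw. destruct Hw as [Hw|[<-|Hw]].
        apply HV; auto; rewrite in_app_iff; auto.
        intro Hf. apply (red_fv _ _ Hv) in Hf. revert Hf. apply HV; auto. rewrite in_app_iff; simpl; auto.
        apply HV; auto; rewrite in_app_iff; simpl; auto.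
      * apply Forall_app in Hvs. destruct Hvs as [Hv1 Hv2]. inversion Hv2; subst.
        apply Forall_app; split; auto. constructor; auto. eapply red_lc_r; eauto.
  -
    subst vs. destruct (mjump_dB_inv _ _ _ _ Eh) as [L0 [b0 [-> E4]]].
    assert (Hx1 : xfresh s v1) by (intros a Ha; apply HV; simpl; auto).
    rewrite E4; auto.
    inversion Hvs; subst.
    apply (IHp (app_list (msubst s (jumps L0 (jsub b0 v1))) rest)) with (M := meas s (jumps L0 (jsub b0 v1))); try reflexivity; try exact G2; try exact E.
    + apply t_step. unfold Rr. simpl. apply AL_red; auto.
      rewrite !msubst_jumps, msubst_abs, msubst_jsub, (msubst_fresh s v1); auto.
      apply red_dB. apply lc_iff. simpl. split; auto.
      rewrite <- msubst_abs, <- msubst_jumps. auto.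
    + apply meas_acc; eapply G_args; eauto.
    + apply mkGood; try assumption.
      * intros a w Ha Hw. apply HV; simpl; auto.
      * apply (jumps_lc (abs b0)); auto. intros k Hk; simpl in *; split; auto. apply lc_at_0; auto.
Qed.


Lemma msubst_fv : forall s t y, In y (fv (msubst s t)) -> In y (fv t) \/ In y (Fs s).
Proof. induction s as [|[x u] s IH]; simpl; intros t y H; auto.
  destruct (IH _ _ H) as [H1|H1]. apply fv_subst in H1. unfold Fs; simpl; rewrite in_app_iff. tauto.
  unfold Fs in *; simpl; rewrite in_app_iff. tauto. Qed.

Lemma Fs_in : forall s x u y, In (x, u) s -> In y (fv u) -> In y (Fs s).
Proof. intros. unfold Fs. apply in_flat_map. exists (x, u); auto. Qed.

Lemma snd_in : forall (s s0 : list (var * term)) a d, map snd s = map snd s0 -> In (a, d) s -> exists a', In (a', d) s0.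
Proof. intros. apply in_snd in H0. rewrite H in H0. apply in_map_iff in H0.
  destruct H0 as [[a' d'] [E Hi]]; simpl in E; subst; eauto. Qed.

Lemma rename_all : forall s t A, NoDup (map fst s) -> JF s -> ulc s -> lc_at 0 t ->
  exists s' t', map snd s' = map snd s /\ NoDup (map fst s') /\ (forall x, In x (map fst s') -> ~ In x A) /\
   lc_at 0 t' /\ mjump s' t' = mjump s t /\ msubst s' t' = msubst s t.
Proof.
  intros s; induction s as [|[x u] s IH] using rev_ind; intros t A ND HJ HL Ht.
  - exists [], t; simpl; repeat split; auto; constructor.
  - destruct (snoc_facts s x u ND HJ HL) as [ND' [HJ' [HL' [Hxs [Hux [Hxu [Hxu' Hu]]]]]]].
    destruct (IH t (x :: A) ND' HJ' HL' Ht) as [s' [t' [E1 [N1 [N2 [N3 [N4 N5]]]]]]].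
    destruct (fresh_ex (A ++ map fst s' ++ fv t' ++ Fs s' ++ fv u ++ [x])) as [x' Hx'].
    rewrite !in_app_iff in Hx'; simpl in Hx'.
    assert (Hxs' : ~ In x (map fst s')) by (intro H; apply N2 in H; simpl in H; tauto).
    assert (Hux' : ufresh s' x).
    { intros a d Hi. destruct (snd_in _ _ _ _ E1 Hi) as [a' Hi']. eapply Hux; eauto. }
    assert (Hxf : xfresh s' (fvar x')).
    { intros a Ha. simpl. intros [->|[]]. tauto. }
    exists (s' ++ [(x', u)]), (subst x (fvar x') t'). repeat split.
    + rewrite !map_app, E1; auto.
    + rewrite map_app. apply ND_app_iff. split; [auto|split; [simpl; repeat constructor; simpl; tauto|]].
      simpl. intros a Ha [E|[]]; subst; tauto.
    + intros a Ha. rewrite map_app in Ha; simpl in Ha; rewrite in_app_iff in Ha.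
      destruct Ha as [Ha|[<-|[]]]. apply N2 in Ha; simpl in Ha; tauto. tauto.
    + apply subst_lc_at; simpl; auto.
    + rewrite !mjump_snoc. rewrite <- subst_mjump; auto. rewrite <- N4. f_equal. unfold close.
      symmetry; apply close_rename. intro H. apply mjump_fv in H.
      destruct H as [H|[a [d [Hi H]]]]. tauto. apply (Fs_in s' a d) in H; auto. tauto.
    + rewrite !msubst_app; simpl. rewrite <- subst_msubst; auto. rewrite subst_rename_var.
      rewrite N5; auto. intro H. apply msubst_fv in H. tauto.
Qed.

Lemma map_fst_combine : forall (xs : list var) (us : list term), length xs = length us -> map fst (combine xs us) = xs.
Proof. induction xs; destruct us; simpl; intros; try discriminate; auto. f_equal; auto. Qed.
Lemma map_snd_combine : forall (xs : list var) (us : list term), length xs = length us -> map snd (combine xs us) = us.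
Proof. induction xs; destruct us; simpl; intros; try discriminate; auto. f_equal; auto. Qed.

Theorem theorem18 (t : term) (xs : list var) (us vs : list term) :
  lc t -> Forall lc us -> Forall lc vs ->
  1 <= length us -> length xs = length us -> NoDup xs ->
  (forall x u, In x xs -> In u us -> ~ In x (fv u)) ->
  Forall SN us ->
  SN (app_list (msubst (combine xs us) t) vs) ->
  SN (app_list (mjump (combine xs us) t) vs).
Proof.
  intros Ht Hus Hvs _ Hlen ND HF HSN H.
  set (s0 := combine xs us) in *.
  assert (E1 : map fst s0 = xs) by (apply map_fst_combine; auto).
  assert (E2 : map snd s0 = us) by (apply map_snd_combine; auto).
  assert (Hargs : forall d, In d (map snd s0) -> lc_at 0 d /\ SN d).
  { intros d Hd. rewrite E2 in Hd. rewrite Forall_forall in Hus, HSN. split; auto. apply lc_iff; auto. }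
  assert (HJ : JF s0).
  { intros a b c d H1 H2. apply HF. rewrite <- E1; eapply in_fst; eauto. rewrite <- E2; eapply in_snd; eauto. }
  assert (HL : ulc s0). { intros a b Hi. apply Hargs. eapply in_snd; eauto. }
  apply lc_iff in Ht.
  destruct (rename_all s0 t (flat_map fv vs ++ Fs s0)) as [s' [t' [F1 [F2 [F3 [F4 [F5 F6]]]]]]]; auto.
  rewrite E1; auto.
  rewrite <- F5. rewrite <- F6 in H.
  apply (main (app_list (msubst s' t') vs)) with (M := meas s' t'); try reflexivity.
  - apply Acc_clos_trans. exact H.
  - apply meas_acc. rewrite F1; auto.
  - apply mkGood.
    + exact F2.
    + intros a d Ha Hd. rewrite F1 in Hd. apply F3 in Ha. intro Hf. apply Ha. apply in_app_iff; right.
      apply in_map_iff in Hd. destruct Hd as [[a' d'] [Ed Hd]]; simpl in Ed; subst d. eapply Fs_in; eauto.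
    + intros d Hd. rewrite F1 in Hd. apply Hargs; auto.
    + intros a v Ha Hv Hf. apply F3 in Ha. apply Ha. apply in_app_iff; left. apply in_flat_map; eauto.
    + exact F4.
    + rewrite Forall_forall in *. intros v Hv. apply lc_iff; auto.
Qed.
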